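(* Let $p\in(0,\infty)$. The following are equivalent: (i) $p\in(0,1)$; (ii) $\mathcal{U}_p(P)<\infty$ for every simple polygon $P\subset\mathbb{R}^n$ with finitely many vertices; (iii) there is a non-degenerate simple closed polygon $P$ with $\mathcal{U}_p(P)<\infty$.
   Context: A simple polygon with finitely many vertices is a subset of $\mathbb{R}^n$ which is a finite union of straight line segments forming either a simple polygonal arc or a simple closed polygonal curve; a non-degenerate simple closed polygon is a simple closed polygonal curve (with finitely many vertices, not contained in a line). For a set $X\subset\mathbb{R}^n$ and $x,y,z\in X$ define $\kappa(x,y,z)=1/r(x,y,z)$ if $x,y,z$ are pairwise distinct and $\kappa(x,y,z)=0$ otherwise, where $r(x,y,z)$ is the circumradius of $x,y,z$ (with $r=\infty$, i.e. $\kappa=0$, for collinear distinct points). Let $\kappa_G(x)=\sup_{y,z\in X}\kappa(x,y,z)$ and, with $\mathcal{H}^1$ the one-dimensional Hausdorff measure restricted to $X$, $\mathcal{U}_p(X)=\int_X\kappa_G^p(x)\,d\mathcal{H}^1(x)$. *)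

(* Defs.v *)
From Stdlib Require Import Reals.
Open Scope R_scope.

(** Points of R^n are represented as functions [nat -> R] vanishing at all
    coordinates [>= n]; [in_Rn n x] expresses that x is such a point. *)
Definition pt := nat -> R.
Definition in_Rn (n : nat) (x : pt) : Prop := forall i, (n <= i)%nat -> x i = 0.

Fixpoint rsum (k : nat) (f : nat -> R) : R :=
  match k with O => 0 | S k' => rsum k' f + f k' end.

Definition dot (n : nat) (x y : pt) : R := rsum n (fun i => x i * y i).
Definition vsub (x y : pt) : pt := fun i => x i - y i.
Definition norm (n : nat) (x : pt) : R := sqrt (dot n x x).
Definition dist (n : nat) (x y : pt) : R := norm n (vsub x y).

(** For pairwise distinct x, y, z: 1 / circumradius = 4 Area / (|x-y||y-z||z-x|),
    with Area = (1/2) sqrt(|a|^2|b|^2 - (a.b)^2), a = y - x, b = z - x.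
    (Gives 0 for collinear distinct points, i.e. r = infinity.) *)
Definition curv (n : nat) (x y z : pt) : R :=
  let a := vsub y x in let b := vsub z x in
  2 * sqrt (dot n a a * dot n b b - (dot n a b) ^ 2)
    / (dist n x y * dist n y z * dist n z x).

(** Superlevel set {x in X | kappa_G(x)^p > t}, for t >= 0, where
    kappa_G(x) = sup_{y,z in X} kappa(x,y,z) and kappa = 0 unless x,y,z are
    pairwise distinct. *)
Definition superlevel (n : nat) (X : pt -> Prop) (p t : R) : pt -> Prop :=
  fun x => X x /\ exists y z, X y /\ X z /\ x <> y /\ y <> z /\ x <> z /\
             0 < curv n x y z /\ t < Rpower (curv n x y z) p.

(** Hausdorff measure H^1 (normalised as sum of diameters), via predicates. *)
Definition Hdelta_le (n : nat) (A : pt -> Prop) (delta c : R) : Prop :=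
  forall eps, 0 < eps ->
  exists (C : nat -> pt -> Prop) (d : nat -> R),
    (forall x, A x -> exists i, C i x) /\
    (forall i, 0 <= d i <= delta /\
               forall x y, C i x -> C i y -> dist n x y <= d i) /\
    (forall N, rsum N d <= c + eps).

Definition H1_le (n : nat) (A : pt -> Prop) (c : R) : Prop :=
  forall delta, 0 < delta -> Hdelta_le n A delta c.

(** c <= H^1(A)  (H^1(A) may be +infinity) *)
Definition H1_ge (n : nat) (A : pt -> Prop) (c : R) : Prop :=
  forall c', c' < c -> ~ H1_le n A c'.

(** U_p(X) < infinity, where U_p(X) = int_X kappa_G^p dH^1 is computed by the
    layer-cake formula  int_0^infty H^1({kappa_G^p > t}) dt, the integral of
    the nonincreasing [0,infty]-valued function t |-> H^1({kappa_G^p > t})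
    being the supremum of its lower (right-endpoint) sums. *)
Definition Up_finite (n : nat) (X : pt -> Prop) (p : R) : Prop :=
  exists M, forall (k : nat) (t c : nat -> R),
    t O = 0 -> (forall i, t i < t (S i)) ->
    (forall i, (i < k)%nat -> H1_ge n (superlevel n X p (t (S i))) (c (S i))) ->
    rsum k (fun i => (t (S i) - t i) * c (S i)) <= M.

Definition seg_pt (v : nat -> pt) (i : nat) (s : R) : pt :=
  fun k => v i k + s * (v (S i) k - v i k).

Definition polyline (v : nat -> pt) (m : nat) : pt -> Prop :=
  fun x => exists i s, (i < m)%nat /\ 0 <= s <= 1 /\ x = seg_pt v i s.

(** Simple polygonal arc with vertices v_0..v_m (m >= 1): the piecewise linear
    parametrisation is injective (segments meet only at shared consecutive
    endpoints). *)
Definition simple_arc (n : nat) (X : pt -> Prop) : Prop :=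
  exists (v : nat -> pt) (m : nat),
    (1 <= m)%nat /\ (forall i, (i <= m)%nat -> in_Rn n (v i)) /\
    (forall i, (i < m)%nat -> v i <> v (S i)) /\
    (forall i j s t, (i < m)%nat -> (j < m)%nat -> 0 <= s <= 1 -> 0 <= t <= 1 ->
       seg_pt v i s = seg_pt v j t ->
       (i = j /\ s = t) \/ (j = S i /\ s = 1 /\ t = 0) \/ (i = S j /\ s = 0 /\ t = 1)) /\
    (forall x, X x <-> polyline v m x).

(** Simple closed polygonal curve with vertices v_0..v_m, v_m = v_0, m >= 3:
    the parametrisation is injective on [0,m). *)
Definition simple_closed (n : nat) (X : pt -> Prop) : Prop :=
  exists (v : nat -> pt) (m : nat),
    (3 <= m)%nat /\ (forall i, (i <= m)%nat -> in_Rn n (v i)) /\ v m = v O /\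
    (forall i, (i < m)%nat -> v i <> v (S i)) /\
    (forall i j s t, (i < m)%nat -> (j < m)%nat -> 0 <= s <= 1 -> 0 <= t <= 1 ->
       seg_pt v i s = seg_pt v j t ->
       (i = j /\ s = t) \/ (j = S i /\ s = 1 /\ t = 0) \/ (i = S j /\ s = 0 /\ t = 1)
       \/ (i = O /\ j = pred m /\ s = 0 /\ t = 1)
       \/ (j = O /\ i = pred m /\ t = 0 /\ s = 1)) /\
    (forall x, X x <-> polyline v m x).

Definition simple_polygon (n : nat) (X : pt -> Prop) : Prop :=
  simple_arc n X \/ simple_closed n X.

Definition nondegenerate (X : pt -> Prop) : Prop :=
  ~ exists a d : pt, forall x, X x -> exists l : R, forall k, x k = a k + l * d k.

(* Main.v *)
Require Import Defs.
From Stdlib Require Import Reals Lra Lia Psatz FunctionalExtensionality List Classical ClassicalEpsilon ZArith.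
Require Import Defs.
Open Scope R_scope.

Lemma rsum_ext k f g : (forall i, (i < k)%nat -> f i = g i) -> rsum k f = rsum k g.
Proof.
  induction k; simpl; intros H; auto.
  rewrite IHk by (intros; apply H; lia). rewrite (H k) by lia. reflexivity.
Qed.

Lemma rsum_add k f g : rsum k (fun i => f i + g i) = rsum k f + rsum k g.
Proof. induction k; simpl; [lra|]. rewrite IHk; ring. Qed.

Lemma rsum_scal k a f : rsum k (fun i => a * f i) = a * rsum k f.
Proof. induction k; simpl; [ring|]. rewrite IHk; ring. Qed.

Lemma rsum_le k f g : (forall i, (i < k)%nat -> f i <= g i) -> rsum k f <= rsum k g.
Proof.
  induction k; simpl; intros H; [lra|].
  assert (H1 := H k ltac:(lia)). assert (rsum k f <= rsum k g) by (apply IHk; intros; apply H; lia). lra.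
Qed.

Lemma rsum_nonneg k f : (forall i, (i < k)%nat -> 0 <= f i) -> 0 <= rsum k f.
Proof. intros H. replace 0 with (rsum k (fun _ => 0)). apply rsum_le; auto.
  clear H. induction k; simpl; auto; rewrite IHk; ring. Qed.

Lemma rsum_mono k k' f : (k <= k')%nat -> (forall i, 0 <= f i) -> rsum k f <= rsum k' f.
Proof.
  intros H Hf. induction H; [lra|]. simpl. specialize (Hf m). lra.
Qed.

Lemma rsum_const0 k : rsum k (fun _ => 0) = 0.
Proof. induction k; simpl; auto; rewrite IHk; ring. Qed.

Lemma dot_ext n u u' w w' : (forall i, (i < n)%nat -> u i = u' i) ->
  (forall i, (i < n)%nat -> w i = w' i) -> dot n u w = dot n u' w'.
Proof. intros H1 H2. unfold dot. apply rsum_ext. intros i Hi. rewrite H1, H2; auto. Qed.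

Lemma dot_sym n u w : dot n u w = dot n w u.
Proof. unfold dot. apply rsum_ext. intros; ring. Qed.

Lemma dot_nonneg n u : 0 <= dot n u u.
Proof. unfold dot. apply rsum_nonneg. intros. nra. Qed.

Lemma dot_zero n u : dot n u u = 0 -> forall i, (i < n)%nat -> u i = 0.
Proof.
  unfold dot. induction n; intros H i Hi; [lia|]. simpl in H.
  assert (0 <= rsum n (fun i => u i * u i)) by (apply rsum_nonneg; intros; nra).
  assert (0 <= u n * u n) by nra.
  assert (Hn : u n * u n = 0) by lra.
  destruct (Nat.eq_dec i n). subst. nra.
  apply IHn; [lra| lia].
Qed.

Definition vadd (u w : pt) : pt := fun i => u i + w i.
Definition vsc (a : R) (u : pt) : pt := fun i => a * u i.

Lemma dot_add_l n u v w : dot n (vadd u v) w = dot n u w + dot n v w.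
Proof. unfold dot, vadd. rewrite <- rsum_add. apply rsum_ext; intros; ring. Qed.
Lemma dot_add_r n u v w : dot n w (vadd u v) = dot n w u + dot n w v.
Proof. unfold dot, vadd. rewrite <- rsum_add. apply rsum_ext; intros; ring. Qed.
Lemma dot_sc_l n a u w : dot n (vsc a u) w = a * dot n u w.
Proof. unfold dot, vsc. rewrite <- rsum_scal. apply rsum_ext; intros; ring. Qed.
Lemma dot_sc_r n a u w : dot n w (vsc a u) = a * dot n w u.
Proof. unfold dot, vsc. rewrite <- rsum_scal. apply rsum_ext; intros; ring. Qed.

Lemma dot_comb2 n a b c d e f :
  dot n (fun i => a * e i + b * f i) (fun i => c * e i + d * f i) =
  a * c * dot n e e + (a * d + b * c) * dot n e f + b * d * dot n f f.
Proof.
  change (fun i => a * e i + b * f i) with (vadd (vsc a e) (vsc b f)).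
  change (fun i => c * e i + d * f i) with (vadd (vsc c e) (vsc d f)).
  rewrite !dot_add_l, !dot_add_r, !dot_sc_l, !dot_sc_r.
  rewrite (dot_sym n f e). ring.
Qed.

Lemma dot_comb3 n a b c a' b' c' e f g :
  dot n (fun i => a * e i + b * f i + c * g i) (fun i => a' * e i + b' * f i + c' * g i) =
  a*a' * dot n e e + b*b' * dot n f f + c*c' * dot n g g
  + (a*b' + b*a') * dot n e f + (a*c'+c*a') * dot n e g + (b*c'+c*b') * dot n f g.
Proof.
  change (fun i => a * e i + b * f i + c * g i) with (vadd (vadd (vsc a e) (vsc b f)) (vsc c g)).
  change (fun i => a' * e i + b' * f i + c' * g i) with (vadd (vadd (vsc a' e) (vsc b' f)) (vsc c' g)).
  rewrite !dot_add_l, !dot_add_r, !dot_sc_l, !dot_sc_r.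
  rewrite (dot_sym n f e), (dot_sym n g e), (dot_sym n g f). ring.
Qed.

Definition Gram n (e f : pt) := dot n e e * dot n f f - (dot n e f) ^ 2.

Lemma Gram_identity n e f :
  dot n (fun i => dot n f f * e i + (- dot n e f) * f i)
        (fun i => dot n f f * e i + (- dot n e f) * f i) = dot n f f * Gram n e f.
Proof. rewrite dot_comb2. unfold Gram. ring. Qed.

Lemma Gram_nonneg n e f : 0 <= Gram n e f.
Proof.
  destruct (dot_nonneg n f) as [Hf|Hf].
  - assert (H := Gram_identity n e f). assert (H2 := dot_nonneg n (fun i => dot n f f * e i + (- dot n e f) * f i)).
    rewrite H in H2. nra.
  - assert (Hz := dot_zero n f (eq_sym Hf)).
    assert (dot n e f = 0). { unfold dot. rewrite <- (rsum_const0 n). apply rsum_ext. intros i Hi. rewrite Hz; auto; ring. }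
    unfold Gram. rewrite H, <- Hf. nra.
Qed.

Lemma Gram_sym n e f : Gram n e f = Gram n f e.
Proof. unfold Gram. rewrite (dot_sym n e f). ring. Qed.

Lemma Gram_zero_par n e f : 0 < dot n f f -> Gram n e f = 0 ->
  forall i, (i < n)%nat -> e i = (dot n e f / dot n f f) * f i.
Proof.
  intros Hf HG i Hi.
  assert (H := Gram_identity n e f). rewrite HG, Rmult_0_r in H.
  assert (Hz := dot_zero _ _ H i Hi). simpl in Hz.
  apply (Rmult_eq_reg_l (dot n f f)); [|lra]. unfold Rdiv.
  replace (dot n f f * (dot n e f * / dot n f f * f i)) with (dot n e f * f i) by (field; lra). lra.
Qed.

Lemma dist_lower n e f a b :
  0 < dot n f f ->
  a ^ 2 * Gram n e f / dot n f f <= dot n (fun i => a * e i + (- b) * f i) (fun i => a * e i + (- b) * f i).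
Proof.
  intros Hf. rewrite dot_comb2. unfold Gram.
  apply Rmult_le_reg_l with (dot n f f); auto.
  replace (dot n f f * (a ^ 2 * (dot n e e * dot n f f - dot n e f ^ 2) / dot n f f))
    with (a ^ 2 * (dot n e e * dot n f f - dot n e f ^ 2)) by (field; lra).
  assert (0 <= (a * dot n e f - b * dot n f f)^2) by (apply pow2_ge_0).
  match goal with |- ?L <= ?R => assert (R - L = (a * dot n e f - b * dot n f f)^2) by ring end. lra.
Qed.

Lemma norm_nonneg n u : 0 <= norm n u.
Proof. apply sqrt_pos. Qed.

Lemma norm_sq n u : norm n u * norm n u = dot n u u.
Proof. apply sqrt_sqrt, dot_nonneg. Qed.

Lemma dist_sym n x y : dist n x y = dist n y x.
Proof. unfold dist, norm, vsub, dot. f_equal. apply rsum_ext; intros; ring. Qed.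

Lemma norm_ext n u u' : (forall i, (i < n)%nat -> u i = u' i) -> norm n u = norm n u'.
Proof. intros H. unfold norm. rewrite (dot_ext n u u' u u'); auto. Qed.

Lemma norm_sc n a u : norm n (fun i => a * u i) = Rabs a * norm n u.
Proof.
  unfold norm. change (fun i => a * u i) with (vsc a u).
  rewrite dot_sc_l, dot_sc_r, <- Rmult_assoc.
  rewrite sqrt_mult_alt by nra. f_equal. replace (a*a) with (Rsqr a) by (unfold Rsqr; ring).
  apply sqrt_Rsqr_abs.
Qed.

Lemma norm_pos n u : (exists i, (i < n)%nat /\ u i <> 0) -> 0 < norm n u.
Proof.
  intros [i [Hi Hu]]. unfold norm. apply sqrt_lt_R0.
  destruct (dot_nonneg n u); auto. exfalso. apply Hu. apply (dot_zero n u); auto.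
Qed.

Lemma norm_zero n u : norm n u = 0 -> forall i, (i < n)%nat -> u i = 0.
Proof.
  intros H. apply dot_zero. unfold norm in H. apply sqrt_eq_0; auto. apply dot_nonneg.
Qed.

Lemma dot_pos_of_norm n u : 0 < norm n u -> 0 < dot n u u.
Proof. intros H. rewrite <- norm_sq. nra. Qed.

Lemma pt_eq_of n x y : in_Rn n x -> in_Rn n y -> (forall i, (i < n)%nat -> x i = y i) -> x = y.
Proof.
  intros Hx Hy H. apply functional_extensionality. intros i.
  destruct (Nat.lt_ge_cases i n). auto. rewrite Hx, Hy; auto.
Qed.

Lemma dist_pos n x y : in_Rn n x -> in_Rn n y -> x <> y -> 0 < dist n x y.
Proof.
  intros Hx Hy Hne. destruct (norm_nonneg n (vsub x y)) as [H|H]; auto.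
  exfalso. apply Hne. apply (pt_eq_of n); auto. intros i Hi.
  assert (Hz := norm_zero n _ (eq_sym H) i Hi). unfold vsub in Hz. lra.
Qed.

Lemma dist_eq0 n x y : dist n x y = 0 -> forall i, (i < n)%nat -> x i = y i.
Proof. intros H i Hi. assert (Hz := norm_zero n _ H i Hi). unfold vsub in Hz. lra. Qed.

Lemma area_sym1 n x y z :
  let a := vsub y x in let b := vsub z x in let c := vsub z y in
  dot n a a * dot n b b - (dot n a b) ^ 2 = dot n a a * dot n c c - (dot n a c) ^ 2.
Proof.
  intros a b c.
  assert (Hb : dot n b b = dot n (fun i => 1 * a i + 1 * c i) (fun i => 1 * a i + 1 * c i)).
  { apply dot_ext; intros; unfold a, b, c, vsub; ring. }
  assert (Hab : dot n a b = dot n (fun i => 1 * a i + 0 * c i) (fun i => 1 * a i + 1 * c i)).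
  { apply dot_ext; intros; unfold a, b, c, vsub; ring. }
  rewrite Hb, Hab, !dot_comb2. ring.
Qed.

Lemma area_sym2 n x y z :
  let a := vsub y x in let b := vsub z x in let c := vsub z y in
  dot n a a * dot n b b - (dot n a b) ^ 2 = dot n b b * dot n c c - (dot n b c) ^ 2.
Proof.
  intros a b c.
  assert (Ha : dot n a a = dot n (fun i => 1 * b i + (-1) * c i) (fun i => 1 * b i + (-1) * c i)).
  { apply dot_ext; intros; unfold a, b, c, vsub; ring. }
  assert (Hab : dot n a b = dot n (fun i => 1 * b i + (-1) * c i) (fun i => 1 * b i + 0 * c i)).
  { apply dot_ext; intros; unfold a, b, c, vsub; ring. }
  rewrite Ha, Hab, !dot_comb2. ring.
Qed.

Lemma norm_vsub_sym n x y : norm n (vsub x y) = norm n (vsub y x).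
Proof. apply (dist_sym n x y). Qed.

Lemma sqrt_area_le u v w : 0 <= u -> 0 <= v -> sqrt (u * v - w ^ 2) <= sqrt u * sqrt v.
Proof.
  intros Hu Hv. rewrite <- sqrt_mult_alt by auto. apply sqrt_le_1_alt. nra.
Qed.

Lemma curv_le_xz n x y z : 0 < dist n x y -> 0 < dist n y z -> 0 < dist n z x ->
  curv n x y z <= 2 / dist n z x.
Proof.
  intros H1 H2 H3. unfold curv. cbv zeta.
  rewrite (area_sym1 n x y z).
  assert (Hs := sqrt_area_le (dot n (vsub y x) (vsub y x)) (dot n (vsub z y) (vsub z y)) (dot n (vsub y x) (vsub z y)) (dot_nonneg _ _) (dot_nonneg _ _)).
  change (sqrt (dot n (vsub y x) (vsub y x))) with (norm n (vsub y x)) in Hs.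
  change (sqrt (dot n (vsub z y) (vsub z y))) with (norm n (vsub z y)) in Hs.
  unfold dist in *. rewrite norm_vsub_sym in Hs. rewrite (norm_vsub_sym n z y) in Hs.
  apply Rmult_le_reg_r with (norm n (vsub x y) * norm n (vsub y z) * norm n (vsub z x)).
  { apply Rmult_lt_0_compat; [apply Rmult_lt_0_compat|]; auto. }
  set (A := norm n (vsub x y)) in *. set (B := norm n (vsub y z)) in *. set (C := norm n (vsub z x)) in *.
  match goal with |- 2 * ?S / _ * _ <= _ => replace (2 * S / (A * B * C) * (A * B * C)) with (2 * S) by (field; repeat split; lra) end.
  replace (2 / C * (A * B * C)) with (2 * (A * B)) by (field; lra).
  lra.
Qed.

Lemma curv_le_xy n x y z : 0 < dist n x y -> 0 < dist n y z -> 0 < dist n z x ->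
  curv n x y z <= 2 / dist n x y.
Proof.
  intros H1 H2 H3. unfold curv. cbv zeta.
  rewrite (area_sym2 n x y z).
  assert (Hs := sqrt_area_le (dot n (vsub z x) (vsub z x)) (dot n (vsub z y) (vsub z y)) (dot n (vsub z x) (vsub z y)) (dot_nonneg _ _) (dot_nonneg _ _)).
  change (sqrt (dot n (vsub z x) (vsub z x))) with (norm n (vsub z x)) in Hs.
  change (sqrt (dot n (vsub z y) (vsub z y))) with (norm n (vsub z y)) in Hs.
  unfold dist in *. rewrite (norm_vsub_sym n z y) in Hs.
  apply Rmult_le_reg_r with (norm n (vsub x y) * norm n (vsub y z) * norm n (vsub z x)).
  { apply Rmult_lt_0_compat; [apply Rmult_lt_0_compat|]; auto. }
  set (A := norm n (vsub x y)) in *. set (B := norm n (vsub y z)) in *. set (C := norm n (vsub z x)) in *.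
  match goal with |- 2 * ?S / _ * _ <= _ => replace (2 * S / (A * B * C) * (A * B * C)) with (2 * S) by (field; repeat split; lra) end.
  replace (2 / A * (A * B * C)) with (2 * (C * B)) by (field; lra).
  lra.
Qed.

Lemma curv_collinear n x y z e a b :
  (forall i, (i < n)%nat -> y i = x i + a * e i) ->
  (forall i, (i < n)%nat -> z i = x i + b * e i) -> curv n x y z = 0.
Proof.
  intros Hy Hz. unfold curv. cbv zeta.
  assert (E1 : dot n (vsub y x) (vsub y x) = dot n (fun i => a * e i + 0 * e i) (fun i => a * e i + 0 * e i)).
  { apply dot_ext; intros; unfold vsub; rewrite Hy by auto; ring. }
  assert (E2 : dot n (vsub z x) (vsub z x) = dot n (fun i => b * e i + 0 * e i) (fun i => b * e i + 0 * e i)).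
  { apply dot_ext; intros; unfold vsub; rewrite Hz by auto; ring. }
  assert (E3 : dot n (vsub y x) (vsub z x) = dot n (fun i => a * e i + 0 * e i) (fun i => b * e i + 0 * e i)).
  { apply dot_ext; intros; unfold vsub; try rewrite Hy by auto; try rewrite Hz by auto; ring. }
  rewrite E1, E2, E3, !dot_comb2.
  replace (_ - _) with 0 by ring. rewrite sqrt_0. unfold Rdiv. ring.
Qed.

Lemma Rdiv_le_0_compat a b : 0 <= a -> 0 < b -> 0 <= a / b.
Proof. intros. unfold Rdiv. apply Rmult_le_pos; auto. apply Rlt_le, Rinv_0_lt_compat; auto. Qed.

Lemma INR_Zto_nat z : IZR z <= INR (Z.to_nat z).
Proof.
  destruct (Z.le_gt_cases 0 z).
  - rewrite INR_IZR_INZ, Z2Nat.id by lia; lra.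
  - replace (Z.to_nat z) with O by lia. simpl. apply IZR_le. lia.
Qed.

Lemma exists_nat_gt x : exists N : nat, x < INR N.
Proof.
  destruct (archimed x) as [H _]. exists (Z.to_nat (up x)).
  assert (H2 := INR_Zto_nat (up x)). lra.
Qed.

Lemma floor_nat y : 0 <= y -> exists k : nat, INR k <= y < INR k + 1.
Proof.
  intros Hy. destruct (base_Int_part y) as [H1 H2].
  assert (Hz : (0 <= Int_part y)%Z).
  { assert (IZR (Int_part y) > -1) by lra.
    assert (Hl : (-1 < Int_part y)%Z) by (apply lt_IZR; simpl; lra). lia. }
  exists (Z.to_nat (Int_part y)). rewrite INR_IZR_INZ, Z2Nat.id by auto. lra.
Qed.

Definition lp (P e : pt) (s : R) : pt := fun k => P k + s * e k.

Lemma seg_lp v i s : seg_pt v i s = lp (v i) (vsub (v (S i)) (v i)) s.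
Proof. reflexivity. Qed.

Lemma dist_lp n P e s s' : dist n (lp P e s) (lp P e s') = Rabs (s - s') * norm n e.
Proof.
  unfold dist. rewrite <- norm_sc. apply norm_ext. intros; unfold vsub, lp. ring.
Qed.

Lemma H1_le_mono n (A B : pt -> Prop) c : (forall x, A x -> B x) -> H1_le n B c -> H1_le n A c.
Proof.
  intros HAB H delta Hd eps He. destruct (H delta Hd eps He) as [C [d [H1 [H2 H3]]]].
  exists C, d. split; auto.
Qed.

Lemma H1_le_weaken n A c c' : c <= c' -> H1_le n A c -> H1_le n A c'.
Proof.
  intros Hc H delta Hd eps He. destruct (H delta Hd eps He) as [C [d [H1 [H2 H3]]]].
  exists C, d. split; auto. split; auto. intros N. specialize (H3 N). lra.
Qed.

Lemma H1_le_empty n c : 0 <= c -> H1_le n (fun _ => False) c.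
Proof.
  intros Hc delta Hd eps He. exists (fun _ _ => False), (fun _ => 0). split; [tauto|]. split.
  - intros i. split; [lra| tauto].
  - intros N. rewrite rsum_const0. lra.
Qed.

Definition inter (f g : nat -> R) (k : nat) : R := if Nat.even k then f (Nat.div2 k) else g (Nat.div2 k).

Lemma even_double m : Nat.even (2 * m) = true.
Proof. rewrite Nat.even_mul. reflexivity. Qed.
Lemma even_sdouble m : Nat.even (S (2 * m)) = false.
Proof. rewrite Nat.even_succ, Nat.odd_mul. reflexivity. Qed.

Lemma rsum_inter M f g : rsum (2 * M) (inter f g) = rsum M f + rsum M g.
Proof.
  induction M; simpl; [ring|].
  replace (M + S (M + 0))%nat with (S (2 * M)) by lia. simpl.
  replace (M + (M + 0))%nat with (2 * M)%nat by lia. rewrite IHM.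
  unfold inter. rewrite even_double, even_sdouble, Nat.div2_double, Nat.div2_succ_double. ring.
Qed.

Lemma H1_le_union n A B a b : H1_le n A a -> H1_le n B b -> H1_le n (fun x => A x \/ B x) (a + b).
Proof.
  intros HA HB delta Hd eps He.
  destruct (HA delta Hd (eps/2) ltac:(lra)) as [C1 [d1 [H11 [H12 H13]]]].
  destruct (HB delta Hd (eps/2) ltac:(lra)) as [C2 [d2 [H21 [H22 H23]]]].
  exists (fun k => if Nat.even k then C1 (Nat.div2 k) else C2 (Nat.div2 k)), (inter d1 d2).
  split; [|split].
  - intros x [Hx|Hx].
    + destruct (H11 x Hx) as [i Hi]. exists (2 * i)%nat. rewrite even_double, Nat.div2_double. auto.
    + destruct (H21 x Hx) as [i Hi]. exists (S (2 * i))%nat. rewrite even_sdouble, Nat.div2_succ_double. auto.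
  - intros k. unfold inter. destruct (Nat.even k); auto.
  - intros N. assert (Hnn : forall k, 0 <= inter d1 d2 k).
    { intros k; unfold inter; destruct (Nat.even k); [apply H12|apply H22]. }
    apply Rle_trans with (rsum (2 * N) (inter d1 d2)).
    + apply rsum_mono; auto. lia.
    + rewrite rsum_inter. specialize (H13 N). specialize (H23 N). lra.
Qed.

Lemma H1_le_bigunion n m (A : nat -> pt -> Prop) (a : nat -> R) :
  (forall i, (i < m)%nat -> H1_le n (A i) (a i)) ->
  (forall i, (i < m)%nat -> 0 <= a i) ->
  H1_le n (fun x => exists i, (i < m)%nat /\ A i x) (rsum m a).
Proof.
  induction m; intros H Ha.
  - simpl. apply H1_le_mono with (fun _ => False). intros x [i [Hi _]]; lia. apply H1_le_empty; lra.
  - simpl. apply H1_le_mono with (fun x => (exists i, (i < m)%nat /\ A i x) \/ A m x).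
    + intros x [i [Hi Hx]]. destruct (Nat.eq_dec i m). subst; auto. left; exists i; split; auto; lia.
    + apply H1_le_union. apply IHm; intros; [apply H|apply Ha]; lia. apply H; lia.
Qed.

Lemma rsum_trunc M K f : (forall k, (K <= k)%nat -> f k = 0) -> (forall k, 0 <= f k) -> rsum M f <= rsum K f.
Proof.
  intros H0 Hp. induction M; simpl.
  - apply rsum_nonneg; auto.
  - destruct (Nat.lt_ge_cases M K).
    + apply (rsum_mono (S M) K f); auto; lia.
    + rewrite H0 by auto. lra.
Qed.

Lemma rsum_constc k c : rsum k (fun _ => c) = INR k * c.
Proof. induction k; simpl rsum; [simpl; ring|]. rewrite IHk, S_INR. ring. Qed.

Lemma H1_le_lp n P e al be : al <= be ->
  H1_le n (fun x => exists s, al <= s <= be /\ x = lp P e s) ((be - al) * norm n e).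
Proof.
  intros Hab delta Hd eps He.
  assert (Hen := norm_nonneg n e).
  destruct (exists_nat_gt ((be - al) * norm n e / Rmin delta eps)) as [N0 HN0].
  set (N := S N0).
  assert (HNpos : 0 < INR N) by (unfold N; rewrite S_INR; assert (0 <= INR N0) by apply pos_INR; lra).
  set (h := (be - al) / INR N).
  assert (Hh : 0 <= h) by (unfold h; apply Rmult_le_pos; [lra| apply Rlt_le, Rinv_0_lt_compat; lra]).
  assert (Hmin : 0 < Rmin delta eps) by (apply Rmin_glb_lt; auto).
  assert (Hhe : h * norm n e <= Rmin delta eps).
  { unfold h. assert (INR N0 <= INR N) by (unfold N; rewrite S_INR; lra).
    assert ((be - al) * norm n e / Rmin delta eps < INR N) by lra.
    apply Rmult_le_reg_r with (INR N / Rmin delta eps). apply Rdiv_lt_0_compat; lra.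
    replace ((be - al) / INR N * norm n e * (INR N / Rmin delta eps)) with ((be - al) * norm n e / Rmin delta eps) by (field; lra).
    replace (Rmin delta eps * (INR N / Rmin delta eps)) with (INR N) by (field; lra). lra. }
  assert (Hd1 := Rmin_l delta eps). assert (Hd2 := Rmin_r delta eps).
  exists (fun k x => (k <= N)%nat /\ exists s, al + INR k * h <= s <= al + (INR k + 1) * h /\ x = lp P e s),
         (fun k => if le_dec k N then h * norm n e else 0).
  split; [|split].
  - intros x [s [Hs ->]].
    destruct (Req_dec h 0) as [H0|H0].
    + exists O. split; [lia|]. exists s. split; auto. assert (be = al).
      { unfold h in H0. apply Rmult_eq_reg_r with (/ INR N). lra. apply Rinv_neq_0_compat; lra. }
      simpl. rewrite H0. lra.
    + assert (Hhp : 0 < h) by lra.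
      destruct (floor_nat ((s - al) / h)) as [k [Hk1 Hk2]]. apply Rmult_le_pos; [lra| apply Rlt_le, Rinv_0_lt_compat; lra].
      exists k. split.
      * apply INR_le. apply Rle_trans with ((s - al) / h); auto.
        apply Rmult_le_reg_r with h; auto. replace ((s - al) / h * h) with (s - al) by (field; lra).
        unfold h. replace (INR N * ((be - al) / INR N)) with (be - al) by (field; lra). lra.
      * exists s. split; auto. split.
        -- apply Rmult_le_compat_r with (r := h) in Hk1; [|lra]. replace ((s - al) / h * h) with (s - al) in Hk1 by (field; lra). lra.
        -- apply Rlt_le. apply Rmult_lt_compat_r with (r := h) in Hk2; [|lra]. replace ((s - al) / h * h) with (s - al) in Hk2 by (field; lra). lra.
  - intros k. destruct (le_dec k N).
    + split. split; [apply Rmult_le_pos; auto| lra].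
      intros x y [_ [s [Hs ->]]] [_ [s' [Hs' ->]]]. rewrite dist_lp.
      apply Rmult_le_compat_r; auto. apply Rabs_le. lra.
    + split; [lra|]. intros x y [Hk _]. lia.
  - intros M. apply Rle_trans with (rsum (S N) (fun k => if le_dec k N then h * norm n e else 0)).
    + apply rsum_trunc. intros k Hk. destruct (le_dec k N); auto; lia.
      intros k. destruct (le_dec k N); [apply Rmult_le_pos; auto| lra].
    + rewrite (rsum_ext _ _ (fun _ => h * norm n e)). rewrite rsum_constc, S_INR.
      unfold h. replace ((INR N + 1) * ((be - al) / INR N * norm n e)) with ((be - al) * norm n e + (be - al) / INR N * norm n e) by (field; lra).
      fold h. lra.
      intros k Hk. destruct (le_dec k N); auto; lia.
Qed.

Lemma H1_ge_le n A c b : H1_ge n A c -> H1_le n A b -> c <= b.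
Proof. intros H1 H2. destruct (Rle_dec c b); auto. exfalso. apply (H1 b); auto. lra. Qed.

Lemma H1_ge_mono n (A B : pt -> Prop) c : (forall x, A x -> B x) -> H1_ge n A c -> H1_ge n B c.
Proof. intros HAB H c' Hc HB. apply (H c' Hc). eapply H1_le_mono; eauto. Qed.

Lemma H1_ge_weaken n A c c' : c' <= c -> H1_ge n A c -> H1_ge n A c'.
Proof. intros Hc H c'' Hc'' HB. apply (H c''); auto; lra. Qed.

Lemma Rabs_le_inv a b : Rabs a <= b -> - b <= a <= b.
Proof. unfold Rabs. destruct (Rcase_abs a); intros; lra. Qed.

Lemma HB_count (L U : nat -> R) a b : a <= b ->
  (forall y, a <= y <= b -> exists i, L i < y < U i) ->
  exists N, forall y, a <= y <= b -> exists i, (i < N)%nat /\ L i < y < U i.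
Proof.
  intros Hab Hc.
  set (E := fun x => a <= x <= b /\ exists N, forall y, a <= y <= x -> exists i, (i < N)%nat /\ L i < y < U i).
  assert (Ea : E a).
  { split; [lra|]. destruct (Hc a ltac:(lra)) as [i Hi]. exists (S i). intros y Hy.
    exists i. split; [lia|]. replace y with a by lra. auto. }
  assert (Hb : bound E) by (exists b; intros x [Hx _]; lra).
  destruct (completeness E Hb (ex_intro _ a Ea)) as [s [Hs1 Hs2]].
  assert (Has : a <= s) by (apply Hs1; auto).
  assert (Hsb : s <= b) by (apply Hs2; intros x [Hx _]; lra).
  destruct (Hc s ltac:(lra)) as [j Hj].
  assert (Hx : exists x, E x /\ L j < x).
  { destruct (classic (exists x, E x /\ L j < x)) as [H|H]; auto. exfalso.
    assert (s <= L j). { apply Hs2. intros x Ex. destruct (Rle_dec x (L j)); auto. exfalso. apply H. exists x; split; auto; lra. }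
    lra. }
  destruct Hx as [x [[Hx1 [N HN]] Hxj]].
  assert (Ex' : forall x', s <= x' < U j -> x' <= b -> E x').
  { intros x' Hx' Hx'b. split; [lra|]. exists (Nat.max N (S j)). intros y Hy.
    destruct (Rle_dec y x).
    - destruct (HN y ltac:(lra)) as [i [Hi Hi2]]. exists i. split; auto. lia.
    - exists j. split; [lia|]. lra. }
  destruct (Rle_dec b ((s + U j) / 2)).
  - assert (E b) as [_ [N' HN']] by (apply Ex'; lra). exists N'. intros y Hy; apply HN'; lra.
  - exfalso. assert (E ((s + U j) / 2)) by (apply Ex'; lra). assert (Hle := Hs1 _ H). lra.
Qed.

Definition sumlen (l : list (R * R)) : R := fold_right (fun I acc => Rmax 0 (snd I - fst I) + acc) 0 l.

Lemma sumlen_app l1 l2 : sumlen (l1 ++ l2) = sumlen l1 + sumlen l2.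
Proof. induction l1; simpl; [ring|]. rewrite IHl1. ring. Qed.

Lemma sumlen_nonneg l : 0 <= sumlen l.
Proof. induction l; simpl; [lra|]. assert (H := Rmax_l 0 (snd a - fst a)). lra. Qed.

Lemma finite_cover_len : forall k l, (length l <= k)%nat -> forall a x, a <= x ->
  (forall y, a <= y <= x -> exists I, In I l /\ fst I < y < snd I) -> x - a <= sumlen l.
Proof.
  induction k; intros l Hl a x Hax Hc.
  - destruct l; [|simpl in Hl; lia]. destruct (Hc a ltac:(lra)) as [I [HI _]]. destruct HI.
  - destruct (Hc x ltac:(lra)) as [I [HI HIx]].
    destruct (in_split I l HI) as [l1 [l2 ->]].
    rewrite sumlen_app. simpl.
    assert (Hm := Rmax_r 0 (snd I - fst I)).
    assert (H1 := sumlen_nonneg l1). assert (H2 := sumlen_nonneg l2).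
    destruct (Rlt_le_dec (fst I) a).
    + lra.
    + assert (fst I - a <= sumlen (l1 ++ l2)).
      { apply (IHk (l1 ++ l2)).
        - rewrite length_app in *. simpl in Hl. lia.
        - auto.
        - intros y Hy. destruct (Hc y ltac:(lra)) as [J [HJ HJy]]. exists J. split; auto.
          apply in_app_or in HJ. apply in_or_app. destruct HJ as [HJ|HJ]; auto.
          destruct HJ as [HJ|HJ]; auto. subst. lra. }
      rewrite sumlen_app in H. lra.
Qed.

Lemma sumlen_seq (L U : nat -> R) N :
  sumlen (map (fun i => (L i, U i)) (seq 0 N)) = rsum N (fun i => Rmax 0 (U i - L i)).
Proof.
  induction N; [reflexivity|]. rewrite seq_S, map_app, sumlen_app, IHN. simpl. ring.
Qed.

Lemma cover_len (L U : nat -> R) a b : a <= b ->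
  (forall y, a <= y <= b -> exists i, L i < y < U i) ->
  exists N, b - a <= rsum N (fun i => Rmax 0 (U i - L i)).
Proof.
  intros Hab Hc. destruct (HB_count L U a b Hab Hc) as [N HN]. exists N.
  rewrite <- sumlen_seq. apply (finite_cover_len (length (map (fun i => (L i, U i)) (seq 0 N)))); auto.
  intros y Hy. destruct (HN y Hy) as [i [Hi Hy']]. exists (L i, U i). split; auto.
  apply (in_map (fun i => (L i, U i))). apply in_seq. lia.
Qed.

Lemma geom_sum N : rsum N (fun i => / 2 ^ (S i)) = 1 - / 2 ^ N.
Proof.
  induction N. simpl; field.
  change (rsum (S N) (fun i => / 2 ^ (S i))) with (rsum N (fun i => / 2 ^ (S i)) + / 2 ^ (S N)).
  rewrite IHN. simpl. field. apply pow_nonzero. lra.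
Qed.

Lemma seg_lower n P e eta c : 0 < norm n e -> 0 < eta ->
  H1_le n (fun x => exists s, 0 < s < eta /\ x = lp P e s) c -> eta * norm n e <= 2 * c.
Proof.
  intros He Heta H. destruct (Rle_dec (eta * norm n e) (2 * c)) as [|Hgt]; auto. exfalso.
  set (gap := eta * norm n e - 2 * c). assert (Hg : 0 < gap) by (unfold gap; lra).
  set (eps := gap / 4). set (ep := gap / (16 * norm n e)).
  assert (Heps : 0 < eps) by (unfold eps; lra).
  assert (Hep : 0 < ep) by (unfold ep; apply Rdiv_lt_0_compat; lra).
  assert (Hep2 : ep < eta / 2).
  { unfold ep. apply Rmult_lt_reg_r with (16 * norm n e). lra.
    replace (gap / (16 * norm n e) * (16 * norm n e)) with gap by (field; lra).
    assert (gap <= eta * norm n e). { unfold gap. destruct (Rle_dec 0 c). lra.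
      (* c negative: H1_le impossible *)
      exfalso. destruct (H 1 ltac:(lra) (- c / 2)) as [C [d [_ [_ H3]]]]. lra.
      specialize (H3 O). simpl in H3. lra. }
    nra. }
  destruct (H 1 ltac:(lra) eps Heps) as [C [d [Hcov [Hd Hsum]]]].
  set (T := fun i s => 0 < s < eta /\ C i (lp P e s)).
  assert (Hsel : forall i, exists s, (exists s', T i s') -> T i s).
  { intros i. destruct (classic (exists s', T i s')) as [[s' Hs']|Hn]. exists s'; auto. exists 0; tauto. }
  set (sel := fun i => proj1_sig (constructive_indefinite_description _ (Hsel i))).
  assert (Hselp : forall i, (exists s', T i s') -> T i (sel i)).
  { intros i. unfold sel. destruct (constructive_indefinite_description _ (Hsel i)). auto. }
  set (w := fun i : nat => ep / 2 ^ (S i)).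
  assert (Hw : forall i, 0 < w i). { intros i. unfold w. apply Rdiv_lt_0_compat; auto. apply pow_lt; lra. }
  set (r := fun i => d i / norm n e).
  destruct (cover_len (fun i => sel i - r i - w i) (fun i => sel i + r i + w i) ep (eta - ep)) as [N HN].
  - lra.
  - intros y Hy. assert (Hy0 : 0 < y < eta) by lra.
    destruct (Hcov (lp P e y) (ex_intro _ y (conj Hy0 eq_refl))) as [i Hi].
    exists i. assert (HT : T i (sel i)) by (apply Hselp; exists y; split; auto; lra).
    destruct HT as [_ HTi]. destruct (Hd i) as [_ Hdiam].
    assert (Hdd := Hdiam _ _ Hi HTi). rewrite dist_lp in Hdd.
    assert (Rabs (y - sel i) <= r i).
    { unfold r. apply Rmult_le_reg_r with (norm n e); auto. replace (d i / norm n e * norm n e) with (d i) by (field; lra). auto. }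
    assert (Hwi := Hw i). apply Rabs_le_inv in H0. split; lra.
  - assert (Hle : rsum N (fun i => Rmax 0 (sel i + r i + w i - (sel i - r i - w i))) =
                  rsum N (fun i => (2 / norm n e) * d i + 2 * ep * / 2 ^ (S i))).
    { apply rsum_ext. intros i _. rewrite Rmax_right.
      unfold r, w. field. split; [apply pow_nonzero; lra| lra].
      assert (Hwi := Hw i). assert (0 <= r i) by (unfold r; apply Rdiv_le_0_compat; [apply Hd| lra]). lra. }
    rewrite Hle, rsum_add, rsum_scal, rsum_scal, geom_sum in HN.
    specialize (Hsum N).
    assert (0 < / 2 ^ N) by (apply Rinv_0_lt_compat, pow_lt; lra).
    assert (HH : eta - 2 * ep <= 2 / norm n e * (c + eps) + 2 * ep).
    { assert (2 / norm n e * rsum N d <= 2 / norm n e * (c + eps)).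
      { apply Rmult_le_compat_l; auto. apply Rdiv_le_0_compat; lra. }
      nra. }
    apply Rmult_le_compat_r with (r := norm n e) in HH; [|lra].
    replace ((eta - 2 * ep) * norm n e) with (eta * norm n e - gap / 8) in HH by (unfold ep; field; lra).
    replace ((2 / norm n e * (c + eps) + 2 * ep) * norm n e) with (2 * c + 2 * eps + gap / 8) in HH by (unfold ep; field; lra).
    unfold eps, gap in HH. lra.
Qed.

Lemma Rpower_pos x y : 0 < Rpower x y.
Proof. unfold Rpower. apply exp_pos. Qed.

Lemma ln_le_sub1 x : 0 < x -> ln x <= x - 1.
Proof. intros H. assert (Hl := exp_ineq1_le (ln x)). rewrite exp_ln in Hl; lra. Qed.

Lemma ln_div x y : 0 < x -> 0 < y -> ln (x / y) = ln x - ln y.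
Proof. intros. unfold Rdiv. rewrite ln_mult, ln_Rinv; auto. apply Rinv_0_lt_compat; auto. Qed.

Lemma tangent_ineq A B q : 0 < A -> A <= B -> 1 < q ->
  (B - A) * Rpower B (- q) <= (Rpower A (1 - q) - Rpower B (1 - q)) / (q - 1).
Proof.
  intros HA HAB Hq. unfold Rpower.
  assert (HB : 0 < B) by lra.
  set (a := ln A). set (b := ln B).
  assert (E1 : exp ((1 - q) * a) = exp ((1 - q) * b) * exp ((1 - q) * (a - b))).
  { rewrite <- exp_plus. f_equal. ring. }
  assert (Hab : a - b <= A / B - 1).
  { unfold a, b. rewrite <- ln_div by auto. apply ln_le_sub1. apply Rdiv_lt_0_compat; auto. }
  assert (E2 : 1 + (1 - q) * (a - b) <= exp ((1 - q) * (a - b))) by apply exp_ineq1_le.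
  assert (E3 : (q - 1) * (1 - A / B) <= (1 - q) * (a - b)) by nra.
  assert (E4 : exp (- q * b) = exp ((1 - q) * b) / B).
  { unfold b. replace (- q * ln B) with ((1 - q) * ln B + - ln B) by ring. rewrite exp_plus, exp_Ropp, exp_ln; auto. }
  rewrite E1, E4. set (Z := exp ((1 - q) * b)). assert (HZ : 0 < Z) by apply exp_pos.
  apply Rmult_le_reg_r with (q - 1). lra.
  replace ((Z * exp ((1 - q) * (a - b)) - Z) / (q - 1) * (q - 1)) with (Z * (exp ((1 - q) * (a - b)) - 1)) by (field; lra).
  replace ((B - A) * (Z / B) * (q - 1)) with (Z * ((q - 1) * (1 - A / B))) by (field; lra).
  apply Rmult_le_compat_l; lra.
Qed.

Lemma rsum_tele k g : rsum k (fun i => g i - g (S i)) = g O - g k.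
Proof. induction k; simpl; [ring|]. rewrite IHk. ring. Qed.

Lemma t_nonneg (t : nat -> R) : t O = 0 -> (forall i, t i < t (S i)) -> forall i, 0 <= t i.
Proof. intros H0 H i. induction i; [lra|]. specialize (H i). lra. Qed.

Lemma tele_sum (t c : nat -> R) q K k : 1 < q -> 0 <= K -> t O = 0 -> (forall i, t i < t (S i)) ->
  (forall i, (i < k)%nat -> c (S i) <= K * Rpower (1 + t (S i)) (- q)) ->
  rsum k (fun i => (t (S i) - t i) * c (S i)) <= K / (q - 1).
Proof.
  intros Hq HK H0 Hinc Hc.
  assert (Ht := t_nonneg t H0 Hinc).
  set (F := fun i => K / (q - 1) * Rpower (1 + t i) (1 - q)).
  apply Rle_trans with (rsum k (fun i => F i - F (S i))).
  - apply rsum_le. intros i Hi. unfold F.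
    assert (Hti := Ht i). assert (Hinc' := Hinc i).
    assert (Htan := tangent_ineq (1 + t i) (1 + t (S i)) q ltac:(lra) ltac:(lra) Hq).
    apply Rle_trans with ((t (S i) - t i) * (K * Rpower (1 + t (S i)) (- q))).
    + apply Rmult_le_compat_l; [lra| auto].
    + replace ((t (S i) - t i) * (K * Rpower (1 + t (S i)) (- q))) with
        (K * ((1 + t (S i) - (1 + t i)) * Rpower (1 + t (S i)) (- q))) by ring.
      apply Rle_trans with (K * ((Rpower (1 + t i) (1 - q) - Rpower (1 + t (S i)) (1 - q)) / (q - 1))).
      * apply Rmult_le_compat_l; auto.
      * right. field. lra.
  - rewrite rsum_tele. unfold F. rewrite H0, Rplus_0_r.
    replace (Rpower 1 (1 - q)) with 1 by (unfold Rpower; rewrite ln_1, Rmult_0_r, exp_0; auto).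
    assert (0 <= K / (q - 1) * Rpower (1 + t k) (1 - q)).
    { apply Rmult_le_pos. apply Rdiv_le_0_compat; lra. left; apply Rpower_pos. }
    lra.
Qed.

Lemma Rpower_neg_mono x y q : 0 < x -> x <= y -> 0 <= q -> Rpower y (- q) <= Rpower x (- q).
Proof.
  intros Hx Hxy Hq. rewrite !Rpower_Ropp. apply Rinv_le_contravar. apply Rpower_pos.
  apply Rle_Rpower_l; auto; lra.
Qed.

Lemma bound_conv (c t Lam Kc q : R) : 0 < t -> 0 <= Lam -> 0 <= Kc -> 0 < q ->
  c <= Lam -> c <= Kc * Rpower t (- q) -> c <= Rpower 2 q * (Lam + Kc) * Rpower (1 + t) (- q).
Proof.
  intros Ht HL HK Hq H1 H2.
  assert (Hinv : Rpower 2 q * Rpower 2 (- q) = 1).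
  { rewrite <- Rpower_plus. replace (q + - q) with 0 by ring. apply Rpower_O; lra. }
  assert (P2 := Rpower_pos 2 q). assert (P2' := Rpower_pos 2 (- q)).
  destruct (Rle_dec t 1).
  - assert (Rpower 2 (- q) <= Rpower (1 + t) (- q)) by (apply Rpower_neg_mono; lra).
    apply Rle_trans with Lam; auto.
    apply Rle_trans with (Rpower 2 q * (Lam + Kc) * Rpower 2 (- q)).
    + replace (Rpower 2 q * (Lam + Kc) * Rpower 2 (- q)) with ((Lam + Kc) * (Rpower 2 q * Rpower 2 (- q))) by ring. rewrite Hinv. lra.
    + apply Rmult_le_compat_l; auto. apply Rmult_le_pos; lra.
  - assert (Rpower (2 * t) (- q) <= Rpower (1 + t) (- q)) by (apply Rpower_neg_mono; lra).
    rewrite <- Rpower_mult_distr in H by lra.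
    apply Rle_trans with (Kc * Rpower t (- q)); auto.
    apply Rle_trans with (Rpower 2 q * (Lam + Kc) * (Rpower 2 (- q) * Rpower t (- q))).
    + replace (Rpower 2 q * (Lam + Kc) * (Rpower 2 (- q) * Rpower t (- q))) with ((Lam + Kc) * Rpower t (- q) * (Rpower 2 q * Rpower 2 (- q))) by ring. rewrite Hinv, Rmult_1_r.
      assert (0 < Rpower t (- q)) by apply Rpower_pos. nra.
    + apply Rmult_le_compat_l; auto. apply Rmult_le_pos; lra.
Qed.

Lemma harmonic_ln k : ln (INR (S k)) <= rsum k (fun i => / INR (S i)).
Proof.
  induction k.
  - simpl. rewrite ln_1. lra.
  - change (rsum (S k) (fun i => / INR (S i))) with (rsum k (fun i => / INR (S i)) + / INR (S k)).
    assert (H0 : 0 < INR (S k)) by (apply lt_0_INR; lia).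
    assert (ln (INR (S (S k))) - ln (INR (S k)) <= / INR (S k)).
    { rewrite <- ln_div by (auto; apply lt_0_INR; lia).
      eapply Rle_trans. apply ln_le_sub1. apply Rdiv_lt_0_compat; auto; apply lt_0_INR; lia.
      rewrite (S_INR (S k)). right. field. lra. }
    lra.
Qed.

Lemma harmonic_unbounded M : exists k, M < rsum k (fun i => / INR (S i)).
Proof.
  destruct (exists_nat_gt (exp (M + 1))) as [k Hk].
  exists k. eapply Rlt_le_trans; [|apply harmonic_ln].
  assert (exp (M + 1) < INR (S k)) by (rewrite S_INR; lra).
  apply ln_increasing in H; [| apply exp_pos]. rewrite ln_exp in H. lra.
Qed.

Lemma lip_cont f c K : 0 < K ->
  (forall x, Rabs (x - c) < 1 -> Rabs (f x - f c) <= K * Rabs (x - c)) -> continuity_pt f c.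
Proof.
  intros HK H. unfold continuity_pt, continue_in, limit1_in, limit_in.
  intros eps He. exists (Rmin 1 (eps / (2 * K))). split.
  - apply Rmin_glb_lt; [lra|]. apply Rdiv_lt_0_compat; lra.
  - intros x [_ Hx]. simpl in *. unfold R_dist in *.
    assert (H1 := Rmin_l 1 (eps / (2 * K))). assert (H2 := Rmin_r 1 (eps / (2 * K))).
    assert (Hx1 : Rabs (x - c) < 1) by lra.
    specialize (H x Hx1).
    assert (K * Rabs (x - c) <= K * (eps / (2 * K))) by (apply Rmult_le_compat_l; lra).
    replace (K * (eps / (2 * K))) with (eps / 2) in H0 by (field; lra). lra.
Qed.

Lemma Rabs_3 u v w : Rabs (u + v - w) <= Rabs u + Rabs v + Rabs w.
Proof. unfold Rabs. repeat destruct Rcase_abs; lra. Qed.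

Definition Fp (DD ee ff De Df ef s t : R) :=
  DD + s * s * ee + t * t * ff + 2 * s * De - 2 * t * Df - 2 * s * t * ef.

Lemma Fp_dot n P e Q f s t :
  dot n (vsub (lp P e s) (lp Q f t)) (vsub (lp P e s) (lp Q f t)) =
  Fp (dot n (vsub P Q) (vsub P Q)) (dot n e e) (dot n f f) (dot n (vsub P Q) e) (dot n (vsub P Q) f) (dot n e f) s t.
Proof.
  rewrite (dot_ext n _ (fun i => 1 * vsub P Q i + s * e i + (- t) * f i) _ (fun i => 1 * vsub P Q i + s * e i + (- t) * f i)).
  rewrite dot_comb3. unfold Fp. ring.
  all: intros; unfold vsub, lp; ring.
Qed.

Lemma seg_sep n P e Q f :
  (forall s t, 0 <= s <= 1 -> 0 <= t <= 1 -> exists k, (k < n)%nat /\ lp P e s k <> lp Q f t k) ->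
  exists d, 0 < d /\ forall s t, 0 <= s <= 1 -> 0 <= t <= 1 -> d <= dist n (lp P e s) (lp Q f t).
Proof.
  intros Hne.
  set (F := Fp (dot n (vsub P Q) (vsub P Q)) (dot n e e) (dot n f f) (dot n (vsub P Q) e) (dot n (vsub P Q) f) (dot n e f)).
  assert (HF : forall s t, dist n (lp P e s) (lp Q f t) = sqrt (F s t)).
  { intros. unfold dist, norm. rewrite Fp_dot. reflexivity. }
  assert (Hmin : forall s, exists t0, 0 <= t0 <= 1 /\ forall t, 0 <= t <= 1 -> F s t0 <= F s t).
  { intros s. destruct (continuity_ab_min (F s) 0 1 ltac:(lra)) as [t0 [H1 H2]].
    - intros c _. unfold F, Fp. reg.
    - exists t0; split; auto. }
  set (tm := fun s => proj1_sig (constructive_indefinite_description _ (Hmin s))).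
  assert (Htm : forall s, 0 <= tm s <= 1 /\ forall t, 0 <= t <= 1 -> F s (tm s) <= F s t).
  { intros s. unfold tm. destruct (constructive_indefinite_description _ (Hmin s)). auto. }
  set (h := fun s => F s (tm s)).
  set (K := 1 + 6 * Rabs (dot n e e) + 2 * Rabs (dot n (vsub P Q) e) + 2 * Rabs (dot n e f)).
  assert (HK : 0 < K) by (unfold K; assert (H1 := Rabs_pos (dot n e e)); assert (H2 := Rabs_pos (dot n (vsub P Q) e)); assert (H3 := Rabs_pos (dot n e f)); lra).
  assert (Hlip : forall s s' t, Rabs s <= 3 -> Rabs s' <= 3 -> 0 <= t <= 1 -> F s t <= F s' t + K * Rabs (s - s')).
  { intros s s' t Hs Hs' Ht. unfold F, Fp.
    set (a := dot n e e). set (b := dot n (vsub P Q) e). set (g := dot n e f).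
    assert (Hd : s * s * a + 2 * s * b - 2 * s * t * g - (s' * s' * a + 2 * s' * b - 2 * s' * t * g)
                 = (s - s') * ((s + s') * a + 2 * b - 2 * t * g)) by ring.
    assert (Rabs ((s - s') * ((s + s') * a + 2 * b - 2 * t * g)) <= K * Rabs (s - s')).
    { rewrite Rabs_mult, Rmult_comm. apply Rmult_le_compat_r; [apply Rabs_pos|].
      eapply Rle_trans; [apply Rabs_3|].
      rewrite !Rabs_mult. rewrite (Rabs_pos_eq 2) by lra. rewrite (Rabs_pos_eq t) by lra.
      assert (Rabs (s + s') <= 6) by (eapply Rle_trans; [apply Rabs_triang| lra]).
      assert (Rabs (s + s') * Rabs a <= 6 * Rabs a) by (apply Rmult_le_compat_r; [apply Rabs_pos|lra]).
      assert (2 * t * Rabs g <= 2 * Rabs g) by (assert (Hg0 := Rabs_pos g); nra).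
      unfold K; fold a b g. lra. }
    apply Rabs_le_inv in H. lra. }
  assert (Hhlip : forall s s', Rabs s <= 3 -> Rabs s' <= 3 -> h s <= h s' + K * Rabs (s - s')).
  { intros s s' Hs Hs'. unfold h. destruct (Htm s) as [_ H1]. destruct (Htm s') as [H2 _].
    specialize (H1 (tm s') H2). assert (H3 := Hlip s s' (tm s') Hs Hs' H2). lra. }
  assert (Hcont : forall c, 0 <= c <= 1 -> continuity_pt h c).
  { intros c Hc. apply (lip_cont h c K HK). intros x Hx.
    assert (Rabs c <= 3) by (rewrite Rabs_pos_eq; lra).
    assert (Rabs x <= 3). { assert (Hx' := Rabs_le_inv _ _ (Rlt_le _ _ Hx)). apply Rabs_le. lra. }
    assert (A1 := Hhlip x c ltac:(auto) ltac:(auto)). assert (A2 := Hhlip c x ltac:(auto) ltac:(auto)).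
    rewrite <- Rabs_Ropp, Ropp_minus_distr in A2. apply Rabs_le. lra. }
  destruct (continuity_ab_min h 0 1 ltac:(lra) Hcont) as [sm [Hsm1 Hsm2]].
  exists (sqrt (h sm)). split.
  - destruct (Htm sm) as [Ht1 _]. unfold h. rewrite <- HF. unfold dist. apply norm_pos.
    destruct (Hne sm (tm sm) Hsm2 Ht1) as [k [Hk Hk2]]. exists k. split; auto. unfold vsub. lra.
  - intros s t Hs Ht. rewrite HF. apply sqrt_le_1_alt.
    destruct (Htm s) as [_ H1]. specialize (H1 t Ht). specialize (Hsm1 s Hs). unfold h in *. lra.
Qed.

Lemma norm_zero_of n u : (forall k, (k < n)%nat -> u k = 0) -> norm n u = 0.
Proof.
  intros H. unfold norm. replace (dot n u u) with 0. apply sqrt_0.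
  unfold dot. rewrite <- (rsum_const0 n). apply rsum_ext. intros; rewrite H; auto; ring.
Qed.

Lemma adj_bound n e f : 0 < norm n e -> 0 < norm n f ->
  exists c, 0 < c /\ forall P a b (x w : pt), (forall k, x k = P k + a * e k) -> (forall k, w k = P k + b * f k) ->
    ~ (exists al, forall k, (k < n)%nat -> w k = x k + al * e k) -> c * Rabs a <= dist n x w.
Proof.
  intros He Hf. assert (Hff := dot_pos_of_norm _ _ Hf).
  destruct (Gram_nonneg n e f) as [HG|HG].
  - exists (sqrt (Gram n e f / dot n f f)). split.
    + apply sqrt_lt_R0. apply Rdiv_lt_0_compat; auto.
    + intros P a b x w Hx Hw _. unfold dist, norm.
      rewrite (dot_ext n (vsub x w) (fun i => a * e i + (- b) * f i) (vsub x w) (fun i => a * e i + (- b) * f i)).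
      2,3: intros i0 Hi0; unfold vsub; rewrite Hx, Hw; ring.
      assert (Hl := dist_lower n e f a b Hff).
      rewrite Rmult_comm, <- (sqrt_Rsqr_abs a), <- sqrt_mult_alt by (apply Rle_0_sqr).
      apply sqrt_le_1_alt. unfold Rsqr. replace (a * a * (Gram n e f / dot n f f)) with (a ^ 2 * Gram n e f / dot n f f) by (field; lra). auto.
  - exists 1. split; [lra|]. intros P a b x w Hx Hw Hn. exfalso. apply Hn.
    assert (Hpar := Gram_zero_par n e f Hff (eq_sym HG)).
    set (mu := dot n e f / dot n f f) in *.
    assert (Hmu : mu <> 0).
    { intros H0. assert (norm n e = 0). { apply norm_zero_of. intros k Hk. rewrite Hpar by auto. rewrite H0; ring. } lra. }
    exists (- a + b / mu). intros k Hk. rewrite Hx, Hw. rewrite (Hpar k Hk). field. auto.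
Qed.

Definition ev (v : nat -> pt) i := vsub (v (S i)) (v i).
Definition adj (v : nat -> pt) m i j := j = S i \/ i = S j \/ (v m = v O /\ ((i = O /\ j = pred m) \/ (j = O /\ i = pred m))).
Definition GoodPoly n (v : nat -> pt) m :=
  (1 <= m)%nat /\ (forall i, (i <= m)%nat -> in_Rn n (v i)) /\ (forall i, (i < m)%nat -> v i <> v (S i)) /\
  (forall i j, (i < m)%nat -> (j < m)%nat -> i <> j -> adj v m i j \/
     forall s t, 0 <= s <= 1 -> 0 <= t <= 1 -> seg_pt v i s <> seg_pt v j t).

Lemma ev_pos n v m i : GoodPoly n v m -> (i < m)%nat -> 0 < norm n (ev v i).
Proof.
  intros [_ [Hin [Hne _]]] Hi. apply (dist_pos n (v (S i)) (v i)); try apply Hin; try lia.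
  intro H; apply (Hne i Hi); auto.
Qed.

Lemma seg_in n v m i s : GoodPoly n v m -> (i < m)%nat -> in_Rn n (seg_pt v i s).
Proof.
  intros [_ [Hin _]] Hi k Hk. unfold seg_pt. rewrite (Hin i), (Hin (S i)); auto; try lia. ring.
Qed.

Lemma min_le_abs1 s : 0 <= s <= 1 -> Rmin s (1 - s) <= Rabs (s - 1).
Proof. intros. rewrite Rabs_left1 by lra. assert (H1 := Rmin_r s (1 - s)). lra. Qed.
Lemma min_le_abs2 s : 0 <= s <= 1 -> Rmin s (1 - s) <= Rabs s.
Proof. intros. rewrite Rabs_pos_eq by lra. apply Rmin_l. Qed.

Definition PairProp n v i j c := forall s t, 0 <= s <= 1 -> 0 <= t <= 1 ->
  ~ (exists al, forall k, (k < n)%nat -> seg_pt v j t k = seg_pt v i s k + al * ev v i k) ->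
  c * Rmin s (1 - s) <= dist n (seg_pt v i s) (seg_pt v j t).

Lemma PairProp_mono n v i j c c' : 0 < c' <= c -> PairProp n v i j c -> PairProp n v i j c'.
Proof.
  intros Hc H s t Hs Ht Hn. specialize (H s t Hs Ht Hn).
  assert (0 <= Rmin s (1 - s)) by (apply Rmin_glb; lra). nra.
Qed.

Lemma pair_lemma n v m i j : GoodPoly n v m -> (i < m)%nat -> (j < m)%nat -> i <> j ->
  exists c, 0 < c /\ PairProp n v i j c.
Proof.
  intros HG Hi Hj Hij. assert (HG' := HG). destruct HG' as [Hm [Hin [Hne Hadj]]].
  assert (Hei := ev_pos n v m i HG Hi). assert (Hej := ev_pos n v m j HG Hj).
  destruct (Hadj i j Hi Hj Hij) as [[Ha|[Ha|[Hvm [[Ha1 Ha2]|[Ha1 Ha2]]]]] | Hdis].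
  - subst j. destruct (adj_bound n (ev v i) (ev v (S i)) Hei Hej) as [c [Hc Hb]].
    exists c. split; auto. intros s t Hs Ht Hn.
    eapply Rle_trans; [| apply (Hb (v (S i)) (s - 1) t); auto].
    + apply Rmult_le_compat_l; [lra| apply min_le_abs1; auto].
    + intros k. unfold seg_pt, ev, vsub. ring.
  - subst i. destruct (adj_bound n (ev v (S j)) (ev v j) Hei Hej) as [c [Hc Hb]].
    exists c. split; auto. intros s t Hs Ht Hn.
    eapply Rle_trans; [| apply (Hb (v (S j)) s (t - 1)); auto].
    + apply Rmult_le_compat_l; [lra| apply min_le_abs2; auto].
    + intros k. unfold seg_pt, ev, vsub. ring.
  - subst i j. destruct (adj_bound n (ev v O) (ev v (pred m)) Hei Hej) as [c [Hc Hb]].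
    exists c. split; auto. intros s t Hs Ht Hn.
    eapply Rle_trans; [| apply (Hb (v O) s (t - 1)); auto].
    + apply Rmult_le_compat_l; [lra| apply min_le_abs2; auto].
    + intros k. unfold seg_pt, ev, vsub. replace (S (pred m)) with m by lia. rewrite Hvm. ring.
  - subst i j. destruct (adj_bound n (ev v (pred m)) (ev v O) Hei Hej) as [c [Hc Hb]].
    exists c. split; auto. intros s t Hs Ht Hn.
    eapply Rle_trans; [| apply (Hb (v O) (s - 1) t); auto].
    + apply Rmult_le_compat_l; [lra| apply min_le_abs1; auto].
    + intros k. unfold seg_pt, ev, vsub. replace (S (pred m)) with m by lia. rewrite Hvm. ring.
  - destruct (seg_sep n (v i) (ev v i) (v j) (ev v j)) as [d [Hd Hsep]].
    + intros s t Hs Ht. destruct (classic (exists k, (k < n)%nat /\ lp (v i) (ev v i) s k <> lp (v j) (ev v j) t k)) as [H|H]; auto.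
      exfalso. apply (Hdis s t Hs Ht). apply (pt_eq_of n); try (apply (seg_in n v m); auto).
      intros k Hk. destruct (classic (seg_pt v i s k = seg_pt v j t k)) as [E|E]; auto. exfalso. apply H. exists k. split; auto.
    + exists d. split; auto. intros s t Hs Ht _.
      assert (Rmin s (1 - s) <= 1) by (assert (H1 := Rmin_l s (1 - s)); lra).
      assert (0 <= Rmin s (1 - s)) by (apply Rmin_glb; lra).
      specialize (Hsep s t Hs Ht). change (seg_pt v i s) with (lp (v i) (ev v i) s). change (seg_pt v j t) with (lp (v j) (ev v j) t). nra.
Qed.

Lemma fin_min1 (P : nat -> R -> Prop) m : (forall i c c', 0 < c' <= c -> P i c -> P i c') ->
  (forall i, (i < m)%nat -> exists c, 0 < c /\ P i c) -> exists c, 0 < c /\ forall i, (i < m)%nat -> P i c.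
Proof.
  intros Hmono. induction m; intros H.
  - exists 1. split; [lra|]. intros; lia.
  - destruct IHm as [c1 [Hc1 H1]]. intros; apply H; lia.
    destruct (H m ltac:(lia)) as [c2 [Hc2 H2]].
    exists (Rmin c1 c2). split. apply Rmin_glb_lt; auto.
    intros i Hi. destruct (Nat.eq_dec i m).
    + subst. apply Hmono with c2; auto. split. apply Rmin_glb_lt; auto. apply Rmin_r.
    + apply Hmono with c1; auto. split. apply Rmin_glb_lt; auto. apply Rmin_l. apply H1; lia.
Qed.

Lemma uniform_pair n v m : GoodPoly n v m ->
  exists c, 0 < c /\ forall i j, (i < m)%nat -> (j < m)%nat -> i <> j -> PairProp n v i j c.
Proof.
  intros HG.
  destruct (fin_min1 (fun i c => forall j, (j < m)%nat -> i <> j -> PairProp n v i j c) m) as [c [Hc H]].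
  - intros i c c' Hc' H j Hj Hij. apply PairProp_mono with c; auto.
  - intros i Hi. apply (fin_min1 (fun j c => i <> j -> PairProp n v i j c) m).
    + intros j c c' Hc' H Hij. apply PairProp_mono with c; auto.
    + intros j Hj. destruct (Nat.eq_dec i j).
      * exists 1. split; [lra|]. intros; contradiction.
      * destruct (pair_lemma n v m i j HG Hi Hj n0) as [c [Hc H]]. exists c. split; auto.
  - exists c. split; auto.
Qed.

Lemma Rpower_inv_lt x y p : 0 < p -> 0 < x -> 0 < y -> x < Rpower y p -> Rpower x (/ p) < y.
Proof.
  intros Hp Hx Hy H. destruct (Rlt_le_dec (Rpower x (/ p)) y) as [|Hle]; auto. exfalso.
  assert (Rpower y p <= Rpower (Rpower x (/ p)) p) by (apply Rle_Rpower_l; lra).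
  rewrite Rpower_mult, Rinv_l, Rpower_1 in H0 by lra. lra.
Qed.

Lemma poly_seg n v m x : GoodPoly n v m -> polyline v m x ->
  exists i s, (i < m)%nat /\ 0 <= s <= 1 /\ x = seg_pt v i s /\ in_Rn n x.
Proof.
  intros HG [i [s [Hi [Hs ->]]]]. exists i, s. repeat split; auto; try lra. apply (seg_in n v m); auto.
Qed.

Lemma sup_incl n v m (X : pt -> Prop) p c t x :
  GoodPoly n v m -> (forall x, X x <-> polyline v m x) -> 0 < c ->
  (forall i j, (i < m)%nat -> (j < m)%nat -> i <> j -> PairProp n v i j c) ->
  0 < p -> 0 < t -> superlevel n X p t x ->
  exists i s, (i < m)%nat /\ 0 <= s <= 1 /\ x = seg_pt v i s /\ Rmin s (1 - s) < 2 / (c * Rpower t (/ p)).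
Proof.
  intros HG HX Hc Hpair Hp Ht [Hxx [y [z [Hy [Hz [Hxy [Hyz [Hxz [Hcp Htc]]]]]]]]].
  apply HX in Hxx, Hy, Hz.
  destruct (poly_seg n v m x HG Hxx) as [i [s [Hi [Hs [-> Hxin]]]]].
  destruct (poly_seg n v m y HG Hy) as [j1 [t1 [Hj1 [Ht1 [Hy1 Hyin]]]]].
  destruct (poly_seg n v m z HG Hz) as [j2 [t2 [Hj2 [Ht2 [Hz1 Hzin]]]]].
  exists i, s. repeat split; auto; try lra.
  set (x := seg_pt v i s) in *.
  assert (Dxy := dist_pos n x y Hxin Hyin Hxy).
  assert (Dyz := dist_pos n y z Hyin Hzin Hyz).
  assert (Dzx := dist_pos n z x Hzin Hxin (fun H => Hxz (eq_sym H))).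
  set (L := fun w : pt => exists al, forall k, (k < n)%nat -> w k = x k + al * ev v i k).
  assert (HLseg : forall t', L (seg_pt v i t')).
  { intros t'. exists (t' - s). intros k Hk. unfold x, seg_pt, ev, vsub. ring. }
  assert (Hw : exists w D, D = dist n x w /\ 0 < D /\ c * Rmin s (1 - s) <= D /\ curv n x y z <= 2 / D).
  { destruct (classic (L y)) as [HLy|HLy]; destruct (classic (L z)) as [HLz|HLz].
    - exfalso. destruct HLy as [a1 Ha1]. destruct HLz as [a2 Ha2].
      rewrite (curv_collinear n x y z (ev v i) a1 a2 Ha1 Ha2) in Hcp. lra.
    - exists z, (dist n x z). split; auto. split; [rewrite dist_sym; auto|]. split.
      + rewrite Hz1. apply Hpair; auto. intros ->. apply HLz. rewrite Hz1. apply HLseg.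
        rewrite <- Hz1. auto.
      + rewrite (dist_sym n x z). apply curv_le_xz; auto.
    - exists y, (dist n x y). split; auto. split; auto. split.
      + rewrite Hy1. apply Hpair; auto. intros ->. apply HLy. rewrite Hy1. apply HLseg.
        rewrite <- Hy1. auto.
      + apply curv_le_xy; auto.
    - exists y, (dist n x y). split; auto. split; auto. split.
      + rewrite Hy1. apply Hpair; auto. intros ->. apply HLy. rewrite Hy1. apply HLseg.
        rewrite <- Hy1. auto.
      + apply curv_le_xy; auto. }
  destruct Hw as [w [D [_ [HD [HcD Hcurv]]]]].
  assert (Hrt := Rpower_inv_lt t (curv n x y z) p Hp Ht Hcp Htc).
  assert (HR : 0 < Rpower t (/ p)) by apply Rpower_pos.
  assert (Hmn : 0 <= Rmin s (1 - s)) by (apply Rmin_glb; lra).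
  set (mn := Rmin s (1 - s)) in *.
  assert (Rpower t (/ p) < 2 / D) by lra.
  apply Rmult_lt_compat_r with (r := D) in H; auto.
  replace (2 / D * D) with 2 in H by (field; lra).
  apply Rmult_lt_reg_r with (c * Rpower t (/ p)). apply Rmult_lt_0_compat; auto.
  replace (2 / (c * Rpower t (/ p)) * (c * Rpower t (/ p))) with 2 by (field; lra).
  assert (mn * (c * Rpower t (/ p)) <= D * Rpower t (/ p)) by nra. lra.
Qed.

Lemma A_main n v m (X : pt -> Prop) p : GoodPoly n v m -> (forall x, X x <-> polyline v m x) ->
  0 < p -> p < 1 -> Up_finite n X p.
Proof.
  intros HG HX Hp Hp1.
  destruct (uniform_pair n v m HG) as [c [Hc Hpair]].
  set (Lam := rsum m (fun i => norm n (ev v i))).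
  assert (HLam : 0 <= Lam) by (apply rsum_nonneg; intros; apply norm_nonneg).
  set (q := / p). assert (Hq : 1 < q). { unfold q. rewrite <- Rinv_1. apply Rinv_lt_contravar; lra. }
  set (Kc := 4 * Lam / c). assert (HKc : 0 <= Kc) by (unfold Kc; apply Rdiv_le_0_compat; lra).
  set (K' := Rpower 2 q * (Lam + Kc)). assert (HK' : 0 <= K') by (unfold K'; assert (H := Rpower_pos 2 q); nra).
  assert (Hbound : forall t cc, 0 < t -> H1_ge n (superlevel n X p t) cc -> cc <= K' * Rpower (1 + t) (- q)).
  { intros t cc Ht Hge. apply (bound_conv cc t Lam Kc q); auto; try lra.
    - apply (H1_ge_le n (superlevel n X p t)); auto.
      apply H1_le_mono with (fun x => exists i, (i < m)%nat /\ (fun i x => exists s, 0 <= s <= 1 /\ x = lp (v i) (ev v i) s) i x).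
      + intros x [Hx _]. apply HX in Hx. destruct Hx as [i [s [Hi [Hs ->]]]]. exists i. split; auto. exists s; auto.
      + unfold Lam. rewrite (rsum_ext m _ (fun i => (1 - 0) * norm n (ev v i))) by (intros; ring).
        apply H1_le_bigunion. intros; apply H1_le_lp; lra. intros; rewrite Rminus_0_r, Rmult_1_l; apply norm_nonneg.
    - apply (H1_ge_le n (superlevel n X p t)); auto.
      set (eta := 2 / (c * Rpower t (/ p))).
      assert (Heta : 0 < eta) by (unfold eta; apply Rdiv_lt_0_compat; [lra| apply Rmult_lt_0_compat; auto; apply Rpower_pos]).
      replace (Kc * Rpower t (- q)) with (rsum m (fun i => (eta - 0) * norm n (ev v i) + (1 - (1 - eta)) * norm n (ev v i))).
      + apply H1_le_mono with (fun x => exists i, (i < m)%nat /\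
            (fun i x => (exists s, 0 <= s <= eta /\ x = lp (v i) (ev v i) s) \/ (exists s, 1 - eta <= s <= 1 /\ x = lp (v i) (ev v i) s)) i x).
        * intros x Hx. destruct (sup_incl n v m X p c t x HG HX Hc Hpair Hp Ht Hx) as [i [s [Hi [Hs [-> Hmn]]]]].
          exists i. split; auto. fold eta in Hmn. unfold Rmin in Hmn. destruct (Rle_dec s (1 - s)).
          -- left. exists s. split; auto. lra.
          -- right. exists s. split; auto. lra.
        * apply H1_le_bigunion.
          -- intros i Hi. apply H1_le_union; apply H1_le_lp; lra.
          -- intros i Hi. assert (H := norm_nonneg n (ev v i)). nra.
      + rewrite (rsum_ext m _ (fun i => (2 * eta) * norm n (ev v i))) by (intros; ring).
        rewrite rsum_scal. fold Lam. unfold Kc, eta, q. rewrite Rpower_Ropp. field.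
        split; [|lra]. assert (H := Rpower_pos t (/ p)). lra. }
  exists (K' / (q - 1)). intros k t cc Ht0 Hinc Hc'.
  apply tele_sum; auto. intros i Hi. apply Hbound; auto.
  assert (H := t_nonneg t Ht0 Hinc (S i)). assert (H2 := Hinc i). assert (H3 := t_nonneg t Ht0 Hinc i). lra.
Qed.

Lemma corner_lower n v m (X : pt -> Prop) p i :
  (forall x, polyline v m x -> X x) -> (S i < m)%nat -> Gram n (ev v i) (ev v (S i)) <> 0 -> 0 < p ->
  exists K E, 0 < K /\ 0 < E /\ forall t, 0 < t ->
    H1_ge n (superlevel n X p t) (Rmin 1 (K / Rpower t (/ p)) * E / 2).
Proof.
  intros HX Hi HG0 Hp.
  set (e := ev v i). set (f := ev v (S i)). fold e f in HG0.
  assert (HG : 0 < Gram n e f) by (destruct (Gram_nonneg n e f); auto; lra).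
  assert (Hee := dot_nonneg n e). assert (Hff := dot_nonneg n f).
  assert (Hee' : 0 < dot n e e). { unfold Gram in HG. destruct Hee; auto. rewrite <- H in HG. nra. }
  assert (Hff' : 0 < dot n f f). { unfold Gram in HG. destruct Hff; auto. rewrite <- H in HG. nra. }
  set (g := fun k => 1 * e k + 1 * f k).
  assert (Hgg : 0 < dot n g g).
  { destruct (dot_nonneg n g) as [H|H]; auto. exfalso. unfold g in H. rewrite dot_comb2 in H.
    assert (H0 : dot n e f = - (dot n e e + dot n f f) / 2) by lra.
    unfold Gram in HG. rewrite H0 in HG.
    assert (0 <= (dot n e e - dot n f f) ^ 2) by apply pow2_ge_0. nra. }
  assert (Hne : 0 < norm n e) by (unfold norm; apply sqrt_lt_R0; auto).
  assert (Hnf : 0 < norm n f) by (unfold norm; apply sqrt_lt_R0; auto).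
  assert (Hng : 0 < norm n g) by (unfold norm; apply sqrt_lt_R0; auto).
  set (K := 2 * sqrt (Gram n e f) / (norm n e * norm n f * norm n g)).
  assert (HK : 0 < K). { unfold K. apply Rdiv_lt_0_compat. assert (H := sqrt_lt_R0 _ HG). lra.
    apply Rmult_lt_0_compat; [apply Rmult_lt_0_compat|]; auto. }
  exists K, (norm n e). split; auto. split; auto. intros t Ht.
  set (eta := Rmin 1 (K / Rpower t (/ p))).
  assert (HRt : 0 < Rpower t (/ p)) by apply Rpower_pos.
  assert (Heta : 0 < eta) by (apply Rmin_glb_lt; [lra| apply Rdiv_lt_0_compat; auto]).
  apply H1_ge_mono with (fun x => exists s, 0 < s < eta /\ x = lp (v (S i)) (fun k => - e k) s).
  - intros x [al [Hal ->]].
    assert (Hal1 : al <= 1) by (assert (H := Rmin_l 1 (K / Rpower t (/ p))); fold eta in H; lra).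
    assert (Hal2 : al < K / Rpower t (/ p)) by (assert (H := Rmin_r 1 (K / Rpower t (/ p))); fold eta in H; lra).
    set (x := lp (v (S i)) (fun k => - e k) al).
    set (y := v (S i)). set (z := seg_pt v (S i) al).
    assert (Ex : x = seg_pt v i (1 - al)).
    { apply functional_extensionality. intros k. unfold x, lp, seg_pt, e, ev, vsub. ring. }
    assert (Ey : y = seg_pt v (S i) 0).
    { apply functional_extensionality. intros k. unfold y, seg_pt. ring. }
    assert (Dxy : dist n x y = al * norm n e).
    { unfold dist. rewrite (norm_ext n _ (fun k => (- al) * e k)). rewrite norm_sc, Rabs_left; [ring| lra].
      intros; unfold x, y, lp, vsub; ring. }
    assert (Dyz : dist n y z = al * norm n f).
    { unfold dist. rewrite (norm_ext n _ (fun k => (- al) * f k)). rewrite norm_sc, Rabs_left; [ring| lra].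
      intros; unfold z, y, seg_pt, f, ev, vsub; ring. }
    assert (Dzx : dist n z x = al * norm n g).
    { unfold dist. rewrite (norm_ext n _ (fun k => al * g k)). rewrite norm_sc, Rabs_pos_eq; [ring| lra].
      intros; unfold z, x, g, seg_pt, lp, f, e, ev, vsub; ring. }
    assert (Hcurv : curv n x y z = K / al).
    { unfold curv. cbv zeta. rewrite Dxy, Dyz, Dzx.
      rewrite (dot_ext n (vsub y x) (fun k => al * e k + 0 * f k) (vsub y x) (fun k => al * e k + 0 * f k)) by (intros; unfold x, y, lp, vsub; ring).
      rewrite (dot_ext n (vsub z x) (fun k => al * e k + al * f k) (vsub z x) (fun k => al * e k + al * f k)) by (intros; unfold x, z, lp, seg_pt, f, e, ev, vsub; ring).
      rewrite (dot_ext n (vsub y x) (fun k => al * e k + 0 * f k) (vsub z x) (fun k => al * e k + al * f k)) by (intros; unfold x, y, z, lp, seg_pt, f, e, ev, vsub; ring).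
      rewrite !dot_comb2.
      replace (al * al * dot n e e + (al * 0 + 0 * al) * dot n e f + 0 * 0 * dot n f f) with (al * al * dot n e e) by ring.
      match goal with |- 2 * sqrt ?A / _ = _ => replace A with ((al * al) * (al * al) * Gram n e f) by (unfold Gram; ring) end.
      rewrite sqrt_mult_alt, sqrt_square by nra. unfold K. field. repeat split; lra. }
    assert (HcP : Rpower t (/ p) < K / al).
    { apply Rmult_lt_reg_r with al. lra. replace (K / al * al) with K by (field; lra).
      apply Rmult_lt_compat_r with (r := Rpower t (/ p)) in Hal2; auto.
      replace (K / Rpower t (/ p) * Rpower t (/ p)) with K in Hal2 by (field; lra). lra. }
    assert (HKal : 0 < K / al) by (apply Rdiv_lt_0_compat; lra).
    split; [| exists y, z].
    + apply HX. rewrite Ex. exists i, (1 - al). repeat split; try lia; try lra; auto.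
    + split; [apply HX; rewrite Ey; exists (S i), 0; repeat split; try lia; try lra; auto|].
      split; [apply HX; exists (S i), al; repeat split; try lia; try lra; auto|].
      split; [intros H; rewrite H in Dxy; unfold dist in Dxy; rewrite (norm_zero_of n (vsub y y)) in Dxy; [nra| intros; unfold vsub; ring]|].
      split; [intros H; rewrite H in Dyz; unfold dist in Dyz; rewrite (norm_zero_of n (vsub z z)) in Dyz; [nra| intros; unfold vsub; ring]|].
      split; [intros H; rewrite H in Dzx; unfold dist in Dzx; rewrite (norm_zero_of n (vsub z z)) in Dzx; [nra| intros; unfold vsub; ring]|].
      rewrite Hcurv. split; auto.
      replace t with (Rpower (Rpower t (/ p)) p) at 1 by (rewrite Rpower_mult, Rinv_l, Rpower_1; lra).
      apply Rlt_Rpower_l; lra.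
  - intros c' Hc' Hle. apply seg_lower in Hle; auto.
    + rewrite (norm_ext n _ (fun k => (-1) * e k)), norm_sc, Rabs_left in Hle by (intros; ring || lra). lra.
    + rewrite (norm_ext n _ (fun k => (-1) * e k)), norm_sc, Rabs_left by (intros; ring || lra). lra.
Qed.

Lemma min_inv_bound K j : 0 < K -> 1 <= j -> Rmin 1 K / j <= Rmin 1 (K / j).
Proof.
  intros HK Hj. unfold Rmin. destruct (Rle_dec 1 K); destruct (Rle_dec 1 (K / j)).
  - apply Rmult_le_reg_r with j; [lra|]. replace (1 / j * j) with 1 by (field; lra). lra.
  - apply Rmult_le_reg_r with j; [lra|]. replace (1 / j * j) with 1 by (field; lra).
    replace (K / j * j) with K by (field; lra). lra.
  - exfalso. assert (K / j <= K). { apply Rmult_le_reg_r with j; [lra|]. replace (K / j * j) with K by (field; lra). nra. } lra.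
  - lra.
Qed.

Lemma corner_not_finite n v m (X : pt -> Prop) p i :
  (forall x, polyline v m x -> X x) -> (S i < m)%nat -> Gram n (ev v i) (ev v (S i)) <> 0 -> 1 <= p ->
  ~ Up_finite n X p.
Proof.
  intros HX Hi HG Hp [M HM].
  destruct (corner_lower n v m X p i HX Hi HG ltac:(lra)) as [K [E [HK [HE Hge]]]].
  set (C0 := Rmin 1 K * E / 2).
  assert (HC0 : 0 < C0) by (unfold C0; assert (0 < Rmin 1 K) by (apply Rmin_glb_lt; lra); nra).
  destruct (harmonic_unbounded (M / C0)) as [k Hk].
  set (c := fun j : nat => Rmin 1 (K / Rpower (INR j) (/ p)) * E / 2).
  assert (Hs := HM k INR c ltac:(reflexivity) ltac:(intros; rewrite S_INR; lra)
     ltac:(intros j _; apply Hge; apply lt_0_INR; lia)).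
  assert (rsum k (fun i => (INR (S i) - INR i) * c (S i)) >= C0 * rsum k (fun i => / INR (S i))).
  { rewrite <- rsum_scal. apply Rle_ge, rsum_le. intros j _. rewrite S_INR.
    replace (INR j + 1 - INR j) with 1 by ring. rewrite <- S_INR. unfold c, C0.
    assert (Hj : 1 <= INR (S j)) by (rewrite S_INR; assert (H := pos_INR j); lra).
    assert (Hpw : Rpower (INR (S j)) (/ p) <= INR (S j)).
    { rewrite <- (Rpower_1 (INR (S j))) at 2 by lra. apply Rle_Rpower; auto.
      rewrite <- Rinv_1. apply Rinv_le_contravar; lra. }
    assert (Hpp := Rpower_pos (INR (S j)) (/ p)).
    assert (K / INR (S j) <= K / Rpower (INR (S j)) (/ p)).
    { apply Rmult_le_compat_l; [lra|]. apply Rinv_le_contravar; auto. }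
    assert (Rmin 1 (K / INR (S j)) <= Rmin 1 (K / Rpower (INR (S j)) (/ p))).
    { unfold Rmin. destruct (Rle_dec 1 (K / INR (S j))); destruct (Rle_dec 1 (K / Rpower (INR (S j)) (/ p))); lra. }
    assert (H3 := min_inv_bound K (INR (S j)) HK Hj).
    assert (Hb : Rmin 1 K * / INR (S j) <= Rmin 1 (K / Rpower (INR (S j)) (/ p))) by (unfold Rdiv in H3; lra).
    set (J := INR (S j)) in *.
    replace (Rmin 1 K * E / 2 * / J) with ((Rmin 1 K * / J) * (E / 2)) by (unfold Rdiv; ring).
    replace (1 * (Rmin 1 (K / Rpower J (/ p)) * E / 2)) with (Rmin 1 (K / Rpower J (/ p)) * (E / 2)) by (unfold Rdiv; ring).
    apply Rmult_le_compat_r; lra. }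
  assert (M < C0 * rsum k (fun i => / INR (S i))).
  { apply Rmult_lt_compat_l with (r := C0) in Hk; auto. replace (C0 * (M / C0)) with M in Hk by (field; lra). auto. }
  lra.
Qed.

Lemma arc_good n X : simple_arc n X -> exists v m, GoodPoly n v m /\ (forall x, X x <-> polyline v m x).
Proof.
  intros [v [m [Hm [Hin [Hne [Hinj HX]]]]]]. exists v, m. split; auto.
  split; auto. split; auto. split; auto.
  intros i j Hi Hj Hij. destruct (classic (adj v m i j)) as [Ha|Ha]; [left; auto| right].
  intros s t Hs Ht Heq. destruct (Hinj i j s t Hi Hj Hs Ht Heq) as [[H1 _]|[[H1 _]|[H1 _]]].
  - auto.
  - apply Ha. left; auto.
  - apply Ha. right; left; auto.
Qed.

Lemma closed_good n X : simple_closed n X -> exists v m, GoodPoly n v m /\ (forall x, X x <-> polyline v m x).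
Proof.
  intros [v [m [Hm [Hin [Hvm [Hne [Hinj HX]]]]]]]. exists v, m. split; auto.
  split; [lia|]. split; auto. split; auto.
  intros i j Hi Hj Hij. destruct (classic (adj v m i j)) as [Ha|Ha]; [left; auto| right].
  intros s t Hs Ht Heq. destruct (Hinj i j s t Hi Hj Hs Ht Heq) as [[H1 _]|[[H1 _]|[[H1 _]|[[H1 [H2 _]]|[H1 [H2 _]]]]]].
  - auto.
  - apply Ha. left; auto.
  - apply Ha. right; left; auto.
  - apply Ha. right; right. split; auto.
  - apply Ha. right; right. split; auto.
Qed.

Lemma collinear_of_straight n v m : GoodPoly n v m ->
  (forall i, (S i < m)%nat -> Gram n (ev v i) (ev v (S i)) = 0) ->
  exists a d : pt, forall x, polyline v m x -> exists l : R, forall k, x k = a k + l * d k.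
Proof.
  intros HG Hst. assert (HG' := HG). destruct HG' as [Hm [Hin [Hne _]]].
  assert (Hev0 : forall j, (j < m)%nat -> forall k, (n <= k)%nat -> ev v j k = 0).
  { intros j Hj k Hk. unfold ev, vsub. rewrite (Hin j), (Hin (S j)); auto; try lia. ring. }
  assert (HP : forall j, (j < m)%nat -> exists mu, forall k, ev v j k = mu * ev v O k).
  { induction j; intros Hj.
    - exists 1. intros; ring.
    - destruct IHj as [mu Hmu]; [lia|].
      assert (Hf := ev_pos n v m (S j) HG Hj). assert (Hff := dot_pos_of_norm _ _ Hf).
      assert (He := ev_pos n v m j HG ltac:(lia)).
      assert (Hpar := Gram_zero_par n (ev v j) (ev v (S j)) Hff (Hst j Hj)).
      set (mu' := dot n (ev v j) (ev v (S j)) / dot n (ev v (S j)) (ev v (S j))) in *.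
      assert (Hmu' : mu' <> 0).
      { intros H0. assert (norm n (ev v j) = 0). { apply norm_zero_of. intros k Hk. rewrite Hpar by auto. rewrite H0; ring. } lra. }
      exists (mu / mu'). intros k. destruct (Nat.lt_ge_cases k n) as [Hk|Hk].
      + assert (H1 := Hpar k Hk). rewrite Hmu in H1. apply (Rmult_eq_reg_l mu'); auto. rewrite <- H1. field. auto.
      + rewrite (Hev0 (S j) Hj k Hk), (Hev0 O ltac:(lia) k Hk). ring. }
  assert (HQ : forall j, (j <= m)%nat -> exists la, forall k, v j k = v O k + la * ev v O k).
  { induction j; intros Hj.
    - exists 0. intros; ring.
    - destruct IHj as [la Hla]; [lia|]. destruct (HP j ltac:(lia)) as [mu Hmu].
      exists (la + mu). intros k. replace (v (S j) k) with (v j k + ev v j k) by (unfold ev, vsub; ring).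
      rewrite Hla, Hmu. ring. }
  exists (v O), (ev v O). intros x [j [s [Hj [Hs ->]]]].
  destruct (HQ j ltac:(lia)) as [la Hla]. destruct (HP j Hj) as [mu Hmu].
  exists (la + s * mu). intros k. unfold seg_pt. replace (v (S j) k - v j k) with (ev v j k) by reflexivity.
  rewrite Hla, Hmu. ring.
Qed.

Definition E0 : pt := fun k => if Nat.eqb k 0 then 1 else 0.
Definition E1 : pt := fun k => if Nat.eqb k 1 then 1 else 0.
Definition Z0 : pt := fun _ => 0.

Lemma E0_in n : (2 <= n)%nat -> in_Rn n E0.
Proof. intros Hn k Hk. unfold E0. destruct (Nat.eqb_spec k 0); [lia| auto]. Qed.
Lemma E1_in n : (2 <= n)%nat -> in_Rn n E1.
Proof. intros Hn k Hk. unfold E1. destruct (Nat.eqb_spec k 1); [lia| auto]. Qed.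
Lemma Z0_in n : in_Rn n Z0.
Proof. intros k _. reflexivity. Qed.

Definition va (i : nat) : pt := match i with O => E0 | 1%nat => Z0 | _ => E1 end.
Definition vt (i : nat) : pt := match i with 1%nat => E0 | 2%nat => E1 | _ => Z0 end.

Lemma dot_two n u w : (2 <= n)%nat -> (forall k, (2 <= k)%nat -> u k = 0) -> dot n u w = u O * w O + u 1%nat * w 1%nat.
Proof.
  intros Hn Hu. induction Hn as [|m Hm IH].
  - unfold dot. simpl. ring.
  - unfold dot in *. simpl. rewrite IH. rewrite (Hu m) by lia. ring.
Qed.

Ltac coord k H := let H' := fresh in assert (H' := f_equal (fun f => f k) H); simpl in H'; unfold E0, E1, Z0 in H'; simpl in H'.

Ltac coordH k H := let H' := fresh "C" in assert (H' := f_equal (fun f => f k) H); cbv beta in H';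
  unfold seg_pt, va, vt, E0, E1, Z0 in H'; simpl in H'.

Lemma arc_ex n : (2 <= n)%nat -> simple_arc n (polyline va 2).
Proof.
  intros Hn. exists va, 2%nat. split; [lia|]. split.
  { intros i Hi. destruct i as [|[|[|i]]]; simpl; [apply E0_in| apply Z0_in| apply E1_in| lia]; auto. }
  split.
  { intros i Hi H. destruct i as [|[|i]]; [coordH 0%nat H| coordH 1%nat H| lia]; lra. }
  split; [|tauto].
  intros i j s t Hi Hj Hs Ht H. coordH 0%nat H. coordH 1%nat H.
  destruct i as [|[|i]]; destruct j as [|[|j]]; try lia; simpl in *.
  - left. split; auto. lra.
  - right; left. repeat split; auto; lra.
  - right; right. repeat split; auto; lra.
  - left. split; auto. lra.
Qed.

Lemma tri_ex n : (2 <= n)%nat -> simple_closed n (polyline vt 3).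
Proof.
  intros Hn. exists vt, 3%nat. split; [lia|]. split.
  { intros i Hi. destruct i as [|[|[|[|i]]]]; simpl; [apply Z0_in| apply E0_in| apply E1_in| apply Z0_in| lia]; auto. }
  split; [reflexivity|]. split.
  { intros i Hi H. destruct i as [|[|[|i]]]; [coordH 0%nat H| coordH 1%nat H| coordH 1%nat H| lia]; lra. }
  split; [|tauto].
  intros i j s t Hi Hj Hs Ht H. coordH 0%nat H. coordH 1%nat H.
  destruct i as [|[|[|i]]]; destruct j as [|[|[|j]]]; try lia; simpl in *.
  - left. split; auto. lra.
  - right; left. repeat split; auto; lra.
  - right; right; right; left. repeat split; auto; lra.
  - right; right; left. repeat split; auto; lra.
  - left. split; auto. lra.
  - right; left. repeat split; auto; lra.
  - right; right; right; right. repeat split; auto; lra.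
  - right; right; left. repeat split; auto; lra.
  - left. split; auto. lra.
Qed.

Lemma tri_nondeg : nondegenerate (polyline vt 3).
Proof.
  intros [a [d H]].
  destruct (H (seg_pt vt 0 0)) as [l0 H0]. exists O, 0. repeat split; auto; lra.
  destruct (H (seg_pt vt 0 1)) as [l1 H1]. exists O, 1. repeat split; auto; lra.
  destruct (H (seg_pt vt 1 1)) as [l2 H2]. exists 1%nat, 1. repeat split; auto; lra.
  assert (A0 := H0 O). assert (A1 := H0 1%nat). assert (B0 := H1 O). assert (B1 := H1 1%nat).
  assert (C0 := H2 O). assert (C1 := H2 1%nat).
  unfold seg_pt, vt, E0, E1, Z0 in *; simpl in *.
  assert (E1' : (l1 - l0) * d O = 1) by lra. assert (E2 : (l1 - l0) * d 1%nat = 0) by lra.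
  assert (E3 : (l2 - l0) * d 1%nat = 1) by lra.
  assert (Hl : l1 - l0 <> 0) by (intro Hz; rewrite Hz in E1'; lra).
  assert (Hd : d 1%nat = 0). { apply (Rmult_eq_reg_l (l1 - l0)); auto. lra. }
  rewrite Hd in E3. lra.
Qed.

Lemma arc_corner n : (2 <= n)%nat -> Gram n (ev va 0) (ev va 1) <> 0.
Proof.
  intros Hn. unfold Gram.
  assert (Hz : forall u : pt, u = ev va 0 \/ u = ev va 1 -> forall k, (2 <= k)%nat -> u k = 0).
  { intros u [->| ->] k Hk; unfold ev, vsub, va, E0, E1, Z0; simpl;
    destruct k as [|[|k]]; try lia; simpl; ring. }
  rewrite !dot_two; auto; try (apply Hz; auto).
  unfold ev, vsub, va, E0, E1, Z0; simpl. lra.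
Qed.

Theorem mainTheorem3 (n : nat) (p : R) :
  (2 <= n)%nat -> 0 < p ->
  (p < 1 <-> (forall X, simple_polygon n X -> Up_finite n X p)) /\
  (p < 1 <-> (exists X, simple_closed n X /\ nondegenerate X /\ Up_finite n X p)).
Proof.
  intros Hn Hp. split; split.
  - intros Hp1 X [Ha|Hc].
    + destruct (arc_good n X Ha) as [v [m [HG HX]]]. apply (A_main n v m); auto.
    + destruct (closed_good n X Hc) as [v [m [HG HX]]]. apply (A_main n v m); auto.
  - intros H. destruct (Rlt_le_dec p 1) as [|Hp1]; auto. exfalso.
    apply (corner_not_finite n va 2 (polyline va 2) p 0); auto.
    apply arc_corner; auto.
    apply H. left. apply arc_ex; auto.
  - intros Hp1. exists (polyline vt 3). split; [apply tri_ex; auto|]. split; [apply tri_nondeg|].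
    destruct (closed_good n _ (tri_ex n Hn)) as [v [m [HG HX]]]. apply (A_main n v m); auto.
  - intros [X [Hc [Hnd Hup]]]. destruct (Rlt_le_dec p 1) as [|Hp1]; auto. exfalso.
    destruct (closed_good n X Hc) as [v [m [HG HX]]].
    destruct (classic (exists i, (S i < m)%nat /\ Gram n (ev v i) (ev v (S i)) <> 0)) as [[i [Hi HGi]]|Hno].
    + apply (corner_not_finite n v m X p i); auto. intros x Hx; apply HX; auto.
    + apply Hnd. destruct (collinear_of_straight n v m HG) as [a [d Had]].
      * intros i Hi. destruct (classic (Gram n (ev v i) (ev v (S i)) = 0)); auto. exfalso. apply Hno. exists i; auto.
      * exists a, d. intros x Hx. apply Had. apply HX; auto.
Qed.
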